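(* Assume the spectrum of $A$ is a finite or countable set of eigenvalues without finite accumulation points. Let $K_0\ge0$, $p>0$, $q>0$, and let $u$ be a global solution of $$|u''+2\delta u'+Au|\le K_0\left(|u|^{1+p}+|A^{1/2}u|^{1+q}\right)$$ (in the sense given in the context) with $\lim_{t\to\infty}|u(t)|_{D(A^{1/2})}=0$. Suppose moreover that there exists $\gamma>2\delta$ such that $$\lim_{t\to+\infty}\left(|u'(t)|+|u(t)|_{D(A^{1/2})}\right)e^{\gamma t}=0.$$ Then $u\equiv0$.
   Context: $H$ is a separable real Hilbert space with norm $|\cdot|$. $A$ is a self-adjoint nonnegative operator with dense domain $D(A)$. $D(A^{1/2})$ carries the norm $|u|_{D(A^{1/2})}=(|u|^2+|A^{1/2}u|^2)^{1/2}$. The constant $\delta>0$ is fixed. A global solution of the differential inequality is a function $u\in C^0([0,\infty),D(A^{1/2}))\cap C^1([0,\infty),H)$ for which there exists $g\in C^0([0,\infty),H)$ such that: - $u$ is the weak solution of $u''+2\delta u'+Au=g$ on $[0,\infty)$; - $|g(t)|\le K_0(|u(t)|^{1+p}+|A^{1/2}u(t)|^{1+q})$ for all $t\ge0$. *)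

(* Defs.v *)
From Stdlib Require Import Reals Lra.
Open Scope R_scope.

Set Implicit Arguments.

Record RHilbert := {
  hcar :> Type;
  hzero : hcar;
  hadd : hcar -> hcar -> hcar;
  hopp : hcar -> hcar;
  hscal : R -> hcar -> hcar;
  hinner : hcar -> hcar -> R;
  hadd_assoc : forall x y z, hadd x (hadd y z) = hadd (hadd x y) z;
  hadd_comm : forall x y, hadd x y = hadd y x;
  hadd_0 : forall x, hadd x hzero = x;
  hadd_opp : forall x, hadd x (hopp x) = hzero;
  hscal_assoc : forall a b x, hscal a (hscal b x) = hscal (a * b) x;
  hscal_1 : forall x, hscal 1 x = x;
  hscal_distr_l : forall a x y, hscal a (hadd x y) = hadd (hscal a x) (hscal a y);
  hscal_distr_r : forall a b x, hscal (a + b) x = hadd (hscal a x) (hscal b x);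
  hinner_sym : forall x y, hinner x y = hinner y x;
  hinner_add_l : forall x y z, hinner (hadd x y) z = hinner x z + hinner y z;
  hinner_scal_l : forall a x y, hinner (hscal a x) y = a * hinner x y;
  hinner_pos : forall x, 0 <= hinner x x;
  hinner_def : forall x, hinner x x = 0 -> x = hzero;
  hcomplete : forall s : nat -> hcar,
    (forall eps, 0 < eps -> exists N, forall m n, (N <= m)%nat -> (N <= n)%nat ->
        sqrt (hinner (hadd (s m) (hopp (s n))) (hadd (s m) (hopp (s n)))) < eps) ->
    exists l, forall eps, 0 < eps -> exists N, forall n, (N <= n)%nat ->
        sqrt (hinner (hadd (s n) (hopp l)) (hadd (s n) (hopp l))) < eps;
  hseparable : exists d : nat -> hcar, forall x eps, 0 < eps ->
    exists n, sqrt (hinner (hadd x (hopp (d n))) (hadd x (hopp (d n)))) < eps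
}.

Arguments hzero {r}.
Arguments hadd {r}.
Arguments hopp {r}.
Arguments hscal {r}.
Arguments hinner {r}.

Section HDefs.
Variable X : RHilbert.

Definition hsub (x y : X) : X := hadd x (hopp y).
Definition hnorm (x : X) : R := sqrt (hinner x x).

(** An (unbounded) operator is a pair (D, A): a domain predicate and a map,
    only meaningful on D. *)
Definition is_subspace (D : X -> Prop) : Prop :=
  D (@hzero X) /\ (forall x y, D x -> D y -> D (hadd x y)) /\
  (forall a x, D x -> D (hscal a x)).

Definition is_dense (D : X -> Prop) : Prop :=
  forall x eps, 0 < eps -> exists y, D y /\ hnorm (hsub x y) < eps.

Definition linear_on (D : X -> Prop) (A : X -> X) : Prop :=
  (forall x y, D x -> D y -> A (hadd x y) = hadd (A x) (A y)) /\
  (forall a x, D x -> A (hscal a x) = hscal a (A x)).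

Definition nonneg_self_adjoint (D : X -> Prop) (A : X -> X) : Prop :=
  is_subspace D /\ is_dense D /\ linear_on D A /\
  (forall x y, D x -> D y -> hinner (A x) y = hinner x (A y)) /\
  (* A* ⊆ A *)
  (forall y z, (forall x, D x -> hinner (A x) y = hinner x z) -> D y /\ A y = z) /\
  (forall x, D x -> 0 <= hinner (A x) x).

Definition is_sqrt_op (DA : X -> Prop) (A : X -> X) (DB : X -> Prop) (B : X -> X) : Prop :=
  nonneg_self_adjoint DB B /\
  (forall x, DA x <-> (DB x /\ DB (B x))) /\
  (forall x, DA x -> B (B x) = A x).

Definition in_resolvent (D : X -> Prop) (A : X -> X) (lam : R) : Prop :=
  (forall y, exists x, D x /\ hsub (A x) (hscal lam x) = y) /\
  (forall x1 x2, D x1 -> D x2 ->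
      hsub (A x1) (hscal lam x1) = hsub (A x2) (hscal lam x2) -> x1 = x2) /\
  (exists C, forall x, D x -> hnorm x <= C * hnorm (hsub (A x) (hscal lam x))).

Definition in_spectrum (D : X -> Prop) (A : X -> X) (lam : R) : Prop :=
  ~ in_resolvent D A lam.

Definition is_eigenvalue (D : X -> Prop) (A : X -> X) (lam : R) : Prop :=
  exists x, D x /\ x <> @hzero X /\ A x = hscal lam x.

Definition discrete_point_spectrum (D : X -> Prop) (A : X -> X) : Prop :=
  (forall lam, in_spectrum D A lam -> is_eigenvalue D A lam) /\
  (exists f : nat -> R, forall lam, in_spectrum D A lam -> exists n, f n = lam) /\
  (forall l0, exists eps, 0 < eps /\
     forall lam, in_spectrum D A lam -> Rabs (lam - l0) < eps -> lam = l0).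

Definition hcont_pos (u : R -> X) : Prop :=
  forall t, 0 <= t -> forall eps, 0 < eps -> exists d, 0 < d /\
    forall s, 0 <= s -> Rabs (s - t) < d -> hnorm (hsub (u s) (u t)) < eps.

Definition hderiv_pos (u : R -> X) (v : X) (t : R) : Prop :=
  forall eps, 0 < eps -> exists d, 0 < d /\
    forall h, h <> 0 -> 0 <= t + h -> Rabs h < d ->
      hnorm (hsub (hscal (/ h) (hsub (u (t + h)) (u t))) v) < eps.

End HDefs.

Arguments hsub {X}.
Arguments hnorm {X}.
Arguments is_subspace {X}.
Arguments is_dense {X}.
Arguments linear_on {X}.
Arguments nonneg_self_adjoint {X}.
Arguments is_sqrt_op {X}.
Arguments in_resolvent {X}.
Arguments in_spectrum {X}.
Arguments is_eigenvalue {X}.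
Arguments discrete_point_spectrum {X}.
Arguments hcont_pos {X}.
Arguments hderiv_pos {X}.

(** power with the convention 0^a = 0 (for a > 0), x^a = Rpower x a for x > 0 *)
Definition rpow (x a : R) : R := if Rle_dec x 0 then 0 else Rpower x a.

(** Global solution of |u'' + 2 delta u' + A u| <= K0 (|u|^{1+p} + |A^{1/2}u|^{1+q})
    in the sense of the context; A^{1/2} is (DB, B), u' is the derivative du. *)
Definition global_solution {X : RHilbert} (DB : X -> Prop) (B : X -> X)
  (delta K0 p q : R) (u du : R -> X) : Prop :=
  (* u in C^0([0,oo), D(A^{1/2})) *)
  (forall t, 0 <= t -> DB (u t)) /\ hcont_pos u /\ hcont_pos (fun t => B (u t)) /\
  (* u in C^1([0,oo), H) with derivative du *)
  (forall t, 0 <= t -> hderiv_pos u (du t) t) /\ hcont_pos du /\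
  exists g : R -> X, hcont_pos g /\
    (* weak solution of u'' + 2 delta u' + A u = g on [0, oo) *)
    (forall v, DB v -> forall t, 0 < t ->
       derivable_pt_lim (fun s => hinner (du s) v) t
         (hinner (g t) v - 2 * delta * hinner (du t) v - hinner (B (u t)) (B v))) /\
    (forall t, 0 <= t ->
       hnorm (g t) <= K0 * (rpow (hnorm (u t)) (1 + p) + rpow (hnorm (B (u t))) (1 + q))).

Definition dnorm {X : RHilbert} (B : X -> X) (x : X) : R :=
  sqrt (hnorm x ^ 2 + hnorm (B x) ^ 2).

(* Main.v *)
Require Import Defs.
From Stdlib Require Import Reals Lra Psatz Classical ClassicalEpsilon FunctionalExtensionality.
Open Scope R_scope.


Lemma ip_add_r (X : RHilbert) (x y z : X) : hinner x (hadd y z) = hinner x y + hinner x z.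
Proof. rewrite hinner_sym, hinner_add_l, (hinner_sym _ y), (hinner_sym _ z); ring. Qed.

Lemma ip_scal_r (X : RHilbert) (a : R) (x y : X) : hinner x (hscal a y) = a * hinner x y.
Proof. rewrite hinner_sym, hinner_scal_l, (hinner_sym _ y); ring. Qed.

Lemma ip_zero_l (X : RHilbert) (y : X) : hinner hzero y = 0.
Proof.
  assert (H := hinner_add_l X hzero hzero y). rewrite hadd_0 in H. lra.
Qed.

Lemma ip_opp_l (X : RHilbert) (x y : X) : hinner (hopp x) y = - hinner x y.
Proof.
  assert (H := hinner_add_l X x (hopp x) y). rewrite hadd_opp, ip_zero_l in H. lra.
Qed.

Lemma ip_sub_l (X : RHilbert) (x y z : X) : hinner (hsub x y) z = hinner x z - hinner y z.
Proof. unfold hsub. rewrite hinner_add_l, ip_opp_l; ring. Qed.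

Lemma ip_opp_r (X : RHilbert) (x y : X) : hinner x (hopp y) = - hinner x y.
Proof. rewrite hinner_sym, ip_opp_l, hinner_sym; ring. Qed.

Lemma ip_sub_r (X : RHilbert) (x y z : X) : hinner z (hsub x y) = hinner z x - hinner z y.
Proof. rewrite hinner_sym, ip_sub_l, !(hinner_sym _ z); ring. Qed.

Lemma ip_zero_r (X : RHilbert) (y : X) : hinner y hzero = 0.
Proof. rewrite hinner_sym; apply ip_zero_l. Qed.

Ltac ipE := repeat (rewrite ?ip_sub_l, ?ip_sub_r, ?hinner_add_l, ?ip_add_r,
   ?hinner_scal_l, ?ip_scal_r, ?ip_opp_l, ?ip_opp_r, ?ip_zero_l, ?ip_zero_r).

Ltac ipEin H := repeat (rewrite ?ip_sub_l, ?ip_sub_r, ?hinner_add_l, ?ip_add_r,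
   ?hinner_scal_l, ?ip_scal_r, ?ip_opp_l, ?ip_opp_r, ?ip_zero_l, ?ip_zero_r in H).

Lemma hsub_zero_eq (X : RHilbert) (x y : X) : hsub x y = hzero -> x = y.
Proof.
  unfold hsub; intro H.
  assert (Hc : hadd (hopp y) y = hzero) by (rewrite hadd_comm; apply hadd_opp).
  rewrite <- (hadd_0 X x), <- Hc, hadd_assoc, H, hadd_comm, hadd_0. reflexivity.
Qed.

Lemma ext_ip (X : RHilbert) (x y : X) : (forall w, hinner x w = hinner y w) -> x = y.
Proof.
  intro H. apply hsub_zero_eq, hinner_def. ipE. rewrite !H. ring.
Qed.

Lemma ip_self_ge0 (X : RHilbert) (x : X) : 0 <= hinner x x.
Proof. apply hinner_pos. Qed.

Lemma quad_cs (a b c : R) : 0 <= c -> (forall t, 0 <= a - 2*t*b + t*t*c) -> b*b <= a*c.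
Proof.
  intros Hc H. destruct (Req_dec c 0) as [E|E].
  - subst c. destruct (Req_dec b 0) as [Eb|Eb]. subst; nra.
    specialize (H ((a+1)/(2*b))).
    assert (Hx : a - 2 * ((a + 1) / (2 * b)) * b + (a + 1) / (2 * b) * ((a + 1) / (2 * b)) * 0 = -1).
    { field. lra. } lra.
  - specialize (H (b/c)). assert (Hc' : 0 < c) by lra.
    assert (Hx : a - 2 * (b / c) * b + b / c * (b / c) * c = (a*c - b*b)/c) by (field; lra).
    rewrite Hx in H. apply Rmult_le_compat_r with (r:=c) in H; [|lra].
    unfold Rdiv in H. rewrite Rmult_0_l, Rmult_assoc, Rinv_l, Rmult_1_r in H; lra.
Qed.

Lemma cs_sq (X : RHilbert) (x y : X) : hinner x y * hinner x y <= hinner x x * hinner y y.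
Proof.
  apply quad_cs. apply hinner_pos. intro t.
  assert (H := hinner_pos X (hsub x (hscal t y))). ipEin H.
  rewrite (hinner_sym _ y x) in H. nra.
Qed.

Lemma nrm_ge0 (X : RHilbert) (x : X) : 0 <= hnorm x.
Proof. apply sqrt_pos. Qed.

Lemma nrm_sq (X : RHilbert) (x : X) : hnorm x * hnorm x = hinner x x.
Proof. apply sqrt_sqrt, hinner_pos. Qed.

Lemma cs (X : RHilbert) (x y : X) : Rabs (hinner x y) <= hnorm x * hnorm y.
Proof.
  unfold hnorm. rewrite <- sqrt_mult by apply hinner_pos.
  rewrite <- sqrt_Rsqr_abs. apply sqrt_le_1_alt. unfold Rsqr. apply cs_sq.
Qed.

Lemma nrm_le_of (X : RHilbert) (a : X) (K : R) : 0 <= K ->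
  (forall w, Rabs (hinner a w) <= K * hnorm w) -> hnorm a <= K.
Proof.
  intros HK H. specialize (H a). rewrite Rabs_right in H by (apply Rle_ge; apply hinner_pos).
  rewrite <- nrm_sq in H. assert (Hn := nrm_ge0 X a).
  destruct (Req_dec (hnorm a) 0). lra. nra.
Qed.

Lemma nrm_zero_iff (X : RHilbert) (x : X) : hnorm x = 0 -> x = hzero.
Proof. intro H. apply hinner_def. rewrite <- nrm_sq, H. ring. Qed.


Definition Cn (X : RHilbert) (f : R -> X) (t : R) : Prop :=
  forall eps, 0 < eps -> exists d, 0 < d /\ forall s, Rabs (s - t) < d -> hnorm (hsub (f s) (f t)) <= eps.

Definition Dv (X : RHilbert) (f : R -> X) (v : X) (t : R) : Prop :=
  forall eps, 0 < eps -> exists d, 0 < d /\ forall h, h <> 0 -> Rabs h < d -> forall w,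
    Rabs ((hinner (f (t+h)) w - hinner (f t) w) / h - hinner v w) <= eps * hnorm w.

Definition Rcont (F : R -> R) (t : R) : Prop :=
  forall eps, 0 < eps -> exists d, 0 < d /\ forall s, Rabs (s - t) < d -> Rabs (F s - F t) < eps.

Lemma Cn_ip (X : RHilbert) (f : R -> X) t : Cn X f t -> forall eps, 0 < eps -> exists d, 0 < d /\
  forall s, Rabs (s - t) < d -> forall w, Rabs (hinner (f s) w - hinner (f t) w) <= eps * hnorm w.
Proof.
  intros H eps He. destruct (H eps He) as [d [Hd H1]]. exists d; split; auto.
  intros s Hs w. specialize (H1 s Hs). rewrite <- ip_sub_l.
  eapply Rle_trans; [apply cs|]. apply Rmult_le_compat_r; auto. apply nrm_ge0.
Qed.

Lemma Cn_of_ip (X : RHilbert) (f : R -> X) t : (forall eps, 0 < eps -> exists d, 0 < d /\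
  forall s, Rabs (s - t) < d -> forall w, Rabs (hinner (f s) w - hinner (f t) w) <= eps * hnorm w) -> Cn X f t.
Proof.
  intros H eps He. destruct (H eps He) as [d [Hd H1]]. exists d; split; auto.
  intros s Hs. apply nrm_le_of; [lra|]. intro w. rewrite ip_sub_l. auto.
Qed.

Lemma cont_pos_Cn (X : RHilbert) (f : R -> X) t : hcont_pos f -> 0 < t -> Cn X f t.
Proof.
  intros H Ht eps He. destruct (H t (Rlt_le _ _ Ht) eps He) as [d [Hd H1]].
  exists (Rmin d t); split. apply Rmin_pos; lra.
  intros s Hs. apply Rlt_le, H1.
  - assert (Rabs (s - t) < t) by (eapply Rlt_le_trans; [apply Hs| apply Rmin_r]).
    apply Rabs_def2 in H0. lra.
  - eapply Rlt_le_trans; [apply Hs| apply Rmin_l].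
Qed.

Lemma deriv_pos_Dv (X : RHilbert) (f : R -> X) v t : hderiv_pos f v t -> 0 < t -> Dv X f v t.
Proof.
  intros H Ht eps He. destruct (H eps He) as [d [Hd H1]].
  exists (Rmin d t); split. apply Rmin_pos; lra.
  intros h Hh Hhd w.
  assert (Hlt : hnorm (hsub (hscal (/ h) (hsub (f (t + h)) (f t))) v) < eps).
  { apply H1; auto.
    - assert (Rabs h < t) by (eapply Rlt_le_trans; [apply Hhd| apply Rmin_r]).
      apply Rabs_def2 in H0. lra.
    - eapply Rlt_le_trans; [apply Hhd| apply Rmin_l]. }
  assert (E : (hinner (f (t + h)) w - hinner (f t) w) / h - hinner v w =
     hinner (hsub (hscal (/ h) (hsub (f (t + h)) (f t))) v) w) by (ipE; unfold Rdiv; ring).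
  rewrite E. eapply Rle_trans; [apply cs|]. apply Rmult_le_compat_r. apply nrm_ge0. lra.
Qed.

Lemma nrm_tri_sub (X : RHilbert) (a b : X) : hnorm a <= hnorm b + hnorm (hsub a b).
Proof.
  apply nrm_le_of. assert (H1 := nrm_ge0 X b); assert (H2 := nrm_ge0 X (hsub a b)); lra.
  intro w. replace (hinner a w) with (hinner b w + hinner (hsub a b) w) by (ipE; ring).
  eapply Rle_trans; [apply Rabs_triang|]. rewrite Rmult_plus_distr_r.
  apply Rplus_le_compat; apply cs.
Qed.

Lemma Dv_ip (X : RHilbert) (f g : R -> X) a b t :
  Dv X f a t -> Dv X g b t -> Cn X g t ->
  derivable_pt_lim (fun s => hinner (f s) (g s)) t (hinner a (g t) + hinner (f t) b).
Proof.
  intros Hf Hg Hc eps He.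
  set (N0 := hnorm (g t)). set (Na := hnorm a). set (NF := hnorm (f t)).
  assert (H0 : 0 <= N0) by apply nrm_ge0. assert (Ha : 0 <= Na) by apply nrm_ge0.
  assert (HF : 0 <= NF) by apply nrm_ge0.
  destruct (Hf (eps / (4 * (N0 + 2)))) as [d1 [Hd1 H1]]. apply Rdiv_lt_0_compat; lra.
  destruct (Hg (eps / (4 * (NF + 1)))) as [d3 [Hd3 H3]]. apply Rdiv_lt_0_compat; lra.
  destruct (Hc (Rmin 1 (eps / (4 * (Na + 1))))) as [d2 [Hd2 H2]].
  { apply Rmin_pos. lra. apply Rdiv_lt_0_compat; lra. }
  assert (Hd : 0 < Rmin d1 (Rmin d2 d3)) by (repeat apply Rmin_pos; lra).
  exists (mkposreal _ Hd). simpl. intros h Hh Hhd.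
  assert (hd1 : Rabs h < d1) by (eapply Rlt_le_trans; [apply Hhd| apply Rmin_l]).
  assert (hd2 : Rabs h < d2) by (eapply Rlt_le_trans; [apply Hhd| eapply Rle_trans; [apply Rmin_r| apply Rmin_l]]).
  assert (hd3 : Rabs h < d3) by (eapply Rlt_le_trans; [apply Hhd| eapply Rle_trans; [apply Rmin_r| apply Rmin_r]]).
  set (F1 := f (t+h)). set (F0 := f t). set (G1 := g (t+h)). set (G0 := g t).
  assert (T1 := H1 h Hh hd1 G1). fold F1 F0 in T1.
  assert (T3 := H3 h Hh hd3 F0). fold G1 G0 in T3.
  assert (Hs : Rabs (t + h - t) < d2) by (replace (t+h-t) with h by ring; auto).
  assert (T2 := H2 (t+h) Hs). fold G1 G0 in T2.
  assert (HG1 : hnorm G1 <= N0 + 1).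
  { eapply Rle_trans. apply (nrm_tri_sub X G1 G0). unfold N0. fold G0.
    assert (Rmin 1 (eps / (4 * (Na + 1))) <= 1) by apply Rmin_l. lra. }
  assert (T2' : Rabs (hinner a G1 - hinner a G0) <= Na * (eps / (4 * (Na + 1)))).
  { rewrite <- ip_sub_r. eapply Rle_trans. apply cs. apply Rmult_le_compat_l; auto.
    eapply Rle_trans; [apply T2| apply Rmin_r]. }
  assert (E : (hinner F1 G1 - hinner F0 G0) / h - (hinner a G0 + hinner F0 b) =
    ((hinner F1 G1 - hinner F0 G1) / h - hinner a G1) + (hinner a G1 - hinner a G0)
    + ((hinner G1 F0 - hinner G0 F0) / h - hinner b F0)).
  { rewrite (hinner_sym _ G1 F0), (hinner_sym _ G0 F0), (hinner_sym _ b F0). field. auto. }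
  rewrite E.
  eapply Rle_lt_trans. apply Rabs_triang. eapply Rle_lt_trans. apply Rplus_le_compat_r. apply Rabs_triang.
  assert (B1 : eps / (4 * (N0 + 2)) * hnorm G1 <= eps/4).
  { apply Rle_trans with (eps / (4 * (N0 + 2)) * (N0 + 2)).
    apply Rmult_le_compat_l. apply Rlt_le, Rdiv_lt_0_compat; lra. lra.
    right. field. lra. }
  assert (B2 : Na * (eps / (4 * (Na + 1))) <= eps/4).
  { apply Rle_trans with ((Na+1) * (eps / (4 * (Na + 1)))).
    apply Rmult_le_compat_r. apply Rlt_le, Rdiv_lt_0_compat; lra. lra.
    right. field. lra. }
  assert (B3 : eps / (4 * (NF + 1)) * hnorm F0 <= eps/4).
  { apply Rle_trans with (eps / (4 * (NF + 1)) * (NF + 1)).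
    apply Rmult_le_compat_l. apply Rlt_le, Rdiv_lt_0_compat; lra. unfold NF; fold F0; lra.
    right. field. lra. }
  lra.
Qed.


Lemma Cn_L (X : RHilbert) (L : X -> X) (f : R -> X) t :
  (forall a w, hinner (L a) w = hinner a (L w)) -> (forall w, hnorm (L w) <= hnorm w) ->
  Cn X f t -> Cn X (fun s => L (f s)) t.
Proof.
  intros Hs Hb Hc. apply Cn_of_ip. intros eps He.
  destruct (Cn_ip X f t Hc eps He) as [d [Hd H1]]. exists d; split; auto.
  intros s Hst w. rewrite !Hs. eapply Rle_trans. apply H1; auto.
  apply Rmult_le_compat_l; [lra| apply Hb].
Qed.

Lemma Dv_L (X : RHilbert) (L : X -> X) (f : R -> X) v t :
  (forall a w, hinner (L a) w = hinner a (L w)) -> (forall w, hnorm (L w) <= hnorm w) ->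
  Dv X f v t -> Dv X (fun s => L (f s)) (L v) t.
Proof.
  intros Hs Hb Hc eps He. destruct (Hc eps He) as [d [Hd H1]]. exists d; split; auto.
  intros h Hh Hhd w. rewrite !Hs. eapply Rle_trans. apply H1; auto.
  apply Rmult_le_compat_l; [lra| apply Hb].
Qed.

Lemma Dv_of_weak (X : RHilbert) (f hh : R -> X) t r : 0 < r ->
  (forall s, Rabs (s - t) < r -> forall w, derivable_pt_lim (fun z => hinner (f z) w) s (hinner (hh s) w)) ->
  Cn X hh t -> Dv X f (hh t) t.
Proof.
  intros Hr Hd Hc eps He. destruct (Cn_ip X hh t Hc eps He) as [d [Hd0 H1]].
  exists (Rmin d r); split. apply Rmin_pos; lra.
  intros h Hh Hhd w.
  assert (hdd : Rabs h < d) by (eapply Rlt_le_trans; [apply Hhd| apply Rmin_l]).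
  assert (hdr : Rabs h < r) by (eapply Rlt_le_trans; [apply Hhd| apply Rmin_r]).
  apply Rabs_def2 in hdd. apply Rabs_def2 in hdr.
  destruct (Rlt_or_le 0 h) as [Hp|Hn].
  - destruct (MVT_cor2 (fun z => hinner (f z) w) (fun z => hinner (hh z) w) t (t+h)) as [c [Ec Hc2]].
    lra. intros c Hc1. apply Hd. apply Rabs_def1; lra.
    assert (E : (hinner (f (t + h)) w - hinner (f t) w) / h - hinner (hh t) w =
              hinner (hh c) w - hinner (hh t) w).
    { rewrite Ec. field. auto. }
    rewrite E. apply H1. apply Rabs_def1; lra.
  - assert (Hn' : h < 0) by lra.
    destruct (MVT_cor2 (fun z => hinner (f z) w) (fun z => hinner (hh z) w) (t+h) t) as [c [Ec Hc2]].
    lra. intros c Hc1. apply Hd. apply Rabs_def1; lra.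
    assert (E : (hinner (f (t + h)) w - hinner (f t) w) / h - hinner (hh t) w =
              hinner (hh c) w - hinner (hh t) w).
    { apply Rmult_eq_reg_r with h; [|auto]. unfold Rdiv.
      replace ((hinner (f (t + h)) w - hinner (f t) w) * / h) with
        (- (hinner (f t) w - hinner (f (t + h)) w) * / h) by ring.
      rewrite Ec. field. auto. }
    rewrite E. apply H1. apply Rabs_def1; lra.
Qed.

Lemma Rcont_ip (X : RHilbert) (f g : R -> X) t : Cn X f t -> Cn X g t ->
  Rcont (fun s => hinner (f s) (g s)) t.
Proof.
  intros Hf Hg eps He.
  set (N0 := hnorm (g t)). set (NF := hnorm (f t)).
  assert (H0 : 0 <= N0) by apply nrm_ge0. assert (HF : 0 <= NF) by apply nrm_ge0.
  destruct (Hf (eps / (4 * (N0 + 2)))) as [d1 [Hd1 H1]]. apply Rdiv_lt_0_compat; lra.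
  destruct (Hg (Rmin 1 (eps / (4 * (NF + 1))))) as [d2 [Hd2 H2]].
  { apply Rmin_pos. lra. apply Rdiv_lt_0_compat; lra. }
  exists (Rmin d1 d2); split. apply Rmin_pos; lra.
  intros s Hs.
  assert (s1 : Rabs (s - t) < d1) by (eapply Rlt_le_trans; [apply Hs| apply Rmin_l]).
  assert (s2 : Rabs (s - t) < d2) by (eapply Rlt_le_trans; [apply Hs| apply Rmin_r]).
  specialize (H1 s s1). specialize (H2 s s2).
  assert (HG1 : hnorm (g s) <= N0 + 1).
  { eapply Rle_trans. apply (nrm_tri_sub X (g s) (g t)). unfold N0.
    assert (Rmin 1 (eps / (4 * (NF + 1))) <= 1) by apply Rmin_l. lra. }
  replace (hinner (f s) (g s) - hinner (f t) (g t)) with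
    (hinner (hsub (f s) (f t)) (g s) + hinner (f t) (hsub (g s) (g t))) by (ipE; ring).
  eapply Rle_lt_trans. apply Rabs_triang.
  assert (B1 : Rabs (hinner (hsub (f s) (f t)) (g s)) <= eps/4).
  { eapply Rle_trans. apply cs. apply Rle_trans with (eps / (4 * (N0 + 2)) * (N0 + 2)).
    apply Rmult_le_compat; try apply nrm_ge0; lra. right; field; lra. }
  assert (B2 : Rabs (hinner (f t) (hsub (g s) (g t))) <= eps/4).
  { eapply Rle_trans. apply cs. apply Rle_trans with ((NF+1) * (eps / (4 * (NF + 1)))).
    apply Rmult_le_compat; try apply nrm_ge0. unfold NF; lra. eapply Rle_trans; [apply H2|apply Rmin_r].
    right; field; lra. }
  lra.
Qed.

Lemma Rcont_cpt (F : R -> R) t : Rcont F t <-> continuity_pt F t.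
Proof.
  unfold continuity_pt, continue_in, limit1_in, limit_in, Rcont. simpl. unfold R_dist, D_x, no_cond.
  split.
  - intros H eps He. destruct (H eps He) as [d [Hd H1]]. exists d; split; auto.
    intros x [_ Hx]. auto.
  - intros H eps He. destruct (H eps He) as [d [Hd H1]]. exists d; split; auto.
    intros s Hs. destruct (Req_dec s t). subst. rewrite Rminus_diag, Rabs_R0; auto.
    apply H1. split; auto.
Qed.


Lemma hopp_scal (X : RHilbert) (x : X) : hopp x = hscal (-1) x.
Proof. apply ext_ip. intro w. ipE. ring. Qed.

Lemma lin_sub (X : RHilbert) (D : X -> Prop) (L : X -> X) a b :
  is_subspace D -> linear_on D L -> D a -> D b ->
  D (hsub a b) /\ L (hsub a b) = hsub (L a) (L b).
Proof.
  intros [H0 [Hadd Hsc]] [La Ls] Ha Hb. unfold hsub. rewrite !hopp_scal.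
  split. apply Hadd; auto. rewrite La; auto. rewrite Ls; auto.
Qed.

Definition Jspec (X : RHilbert) (DA : X -> Prop) (A : X -> X) (c : R) (w x : X) : Prop :=
  DA x /\ forall v, hinner (A x) v = c * hinner w v - c * hinner x v.

Definition Jop (X : RHilbert) (DA : X -> Prop) (A : X -> X) (c : R) (w : X) : X :=
  epsilon (inhabits (@hzero X)) (Jspec X DA A c w).

Lemma J_exists (X : RHilbert) (DA : X -> Prop) (A : X -> X) c w :
  nonneg_self_adjoint DA A -> discrete_point_spectrum DA A -> 0 < c ->
  exists x, Jspec X DA A c w x.
Proof.
  intros HA [Hsp _] Hc. destruct HA as [HsubA [HdenA [HlinA [HsymA [HadjA HnnA]]]]].
  assert (Hr : in_resolvent DA A (-c)).
  { apply NNPP. intro Hn. destruct (Hsp (-c) Hn) as [x [Dx [Hx0 Ax]]].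
    apply Hx0, hinner_def. assert (H1 := HnnA x Dx). rewrite Ax in H1. ipEin H1.
    assert (H2 := hinner_pos X x). nra. }
  destruct Hr as [Hsurj _]. destruct (Hsurj (hscal c w)) as [x [Dx Ex]].
  exists x. split; auto. intro v.
  assert (E := f_equal (fun z => hinner z v) Ex). simpl in E. ipEin E. lra.
Qed.

Lemma J_spec (X : RHilbert) (DA : X -> Prop) (A : X -> X) c w :
  nonneg_self_adjoint DA A -> discrete_point_spectrum DA A -> 0 < c ->
  Jspec X DA A c w (Jop X DA A c w).
Proof.
  intros. unfold Jop. apply epsilon_spec. apply J_exists; auto.
Qed.

Lemma J_sym (X : RHilbert) (DA : X -> Prop) (A : X -> X) c w v :
  nonneg_self_adjoint DA A -> discrete_point_spectrum DA A -> 0 < c ->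
  hinner (Jop X DA A c w) v = hinner w (Jop X DA A c v).
Proof.
  intros HA Hs Hc. destruct (J_spec X DA A c w HA Hs Hc) as [D1 S1].
  destruct (J_spec X DA A c v HA Hs Hc) as [D2 S2].
  set (x := Jop X DA A c w) in *. set (y := Jop X DA A c v) in *.
  destruct HA as [HsubA [HdenA [HlinA [HsymA [HadjA HnnA]]]]].
  assert (E := HsymA x y D1 D2). rewrite S1, (hinner_sym _ x (A y)), S2 in E.
  rewrite (hinner_sym _ y x) in E. rewrite (hinner_sym _ x v).
  apply Rmult_eq_reg_l with c; lra.
Qed.

Lemma J_bd (X : RHilbert) (DA : X -> Prop) (A : X -> X) c w :
  nonneg_self_adjoint DA A -> discrete_point_spectrum DA A -> 0 < c ->
  hnorm (Jop X DA A c w) <= hnorm w.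
Proof.
  intros HA Hs Hc. destruct (J_spec X DA A c w HA Hs Hc) as [D1 S1].
  set (x := Jop X DA A c w) in *.
  destruct HA as [HsubA [HdenA [HlinA [HsymA [HadjA HnnA]]]]].
  assert (H1 := HnnA x D1). rewrite S1 in H1.
  assert (H2 : hinner x x <= hinner w x) by nra.
  assert (H3 := cs X w x). rewrite <- nrm_sq in H2.
  assert (H4 : hinner w x <= Rabs (hinner w x)) by apply Rle_abs.
  assert (Hx := nrm_ge0 X x). assert (Hw := nrm_ge0 X w).
  destruct (Req_dec (hnorm x) 0). lra. nra.
Qed.

Lemma J_lin (X : RHilbert) (DA : X -> Prop) (A : X -> X) c w y v :
  nonneg_self_adjoint DA A -> discrete_point_spectrum DA A -> 0 < c ->
  hinner (Jop X DA A c (hsub w y)) v = hinner (Jop X DA A c w) v - hinner (Jop X DA A c y) v.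
Proof.
  intros HA Hs Hc. rewrite !J_sym by auto. ipE. ring.
Qed.

Lemma J_unique (X : RHilbert) (DA : X -> Prop) (A : X -> X) c w x1 x2 :
  nonneg_self_adjoint DA A -> 0 < c ->
  Jspec X DA A c w x1 -> Jspec X DA A c w x2 -> x1 = x2.
Proof.
  intros HA Hc [D1 S1] [D2 S2].
  destruct HA as [HsubA [HdenA [HlinA [HsymA [HadjA HnnA]]]]].
  destruct (lin_sub X DA A x1 x2 HsubA HlinA D1 D2) as [Dd Ad].
  apply hsub_zero_eq, hinner_def.
  assert (H1 := HnnA _ Dd). rewrite Ad in H1. ipEin H1. rewrite !S1, !S2 in H1.
  assert (H2 := hinner_pos X (hsub x1 x2)). ipEin H2.
  ipE. rewrite (hinner_sym _ x2 x1) in *. rewrite (hinner_sym _ w x1), (hinner_sym _ w x2) in H1. nra.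
Qed.

Lemma J_close (X : RHilbert) (DA : X -> Prop) (A : X -> X) c y :
  nonneg_self_adjoint DA A -> discrete_point_spectrum DA A -> 0 < c -> DA y ->
  hnorm (hsub (Jop X DA A c y) y) <= hnorm (A y) / c.
Proof.
  intros HA Hs Hc Dy. destruct (J_spec X DA A c y HA Hs Hc) as [D1 S1].
  set (x := Jop X DA A c y) in *.
  destruct HA as [HsubA [HdenA [HlinA [HsymA [HadjA HnnA]]]]].
  destruct (lin_sub X DA A x y HsubA HlinA D1 Dy) as [Dd Ad].
  assert (H1 := HnnA _ Dd). rewrite Ad in H1. ipEin H1. rewrite !S1 in H1.
  set (d := hsub x y).
  assert (E : hinner (A y) d = hinner (A y) x - hinner (A y) y) by (unfold d; ipE; ring).
  assert (H2 : c * hinner d d <= - hinner (A y) d).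
  { unfold d; ipE. rewrite (hinner_sym _ y x) in *. lra. }
  assert (H3 := cs X (A y) d). assert (H4 : - hinner (A y) d <= Rabs (hinner (A y) d)).
  { rewrite <- Rabs_Ropp. apply Rle_abs. }
  rewrite <- nrm_sq in H2. assert (Hd := nrm_ge0 X d). assert (Ha := nrm_ge0 X (A y)).
  apply Rmult_le_reg_l with c; auto. replace (c * (hnorm (A y) / c)) with (hnorm (A y)) by (field; lra).
  destruct (Req_dec (hnorm d) 0). rewrite H; nra. nra.
Qed.

Lemma J_conv (X : RHilbert) (DA : X -> Prop) (A : X -> X) w :
  nonneg_self_adjoint DA A -> discrete_point_spectrum DA A ->
  forall eps, 0 < eps -> exists C, 0 < C /\ forall c, C <= c ->
    hnorm (hsub (Jop X DA A c w) w) <= eps.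
Proof.
  intros HA Hs eps He. assert (HA' := HA).
  destruct HA' as [HsubA [HdenA [HlinA [HsymA [HadjA HnnA]]]]].
  destruct (HdenA w (eps/3)) as [y [Dy Hy]]. lra.
  set (C := 3 * hnorm (A y) / eps + 1).
  assert (Ha := nrm_ge0 X (A y)).
  assert (HC : 0 < C). { unfold C. assert (0 <= 3 * hnorm (A y) / eps). apply Rmult_le_pos. lra. apply Rlt_le, Rinv_0_lt_compat; lra. lra. }
  exists C; split; auto. intros c Hcc. assert (Hc : 0 < c) by lra.
  assert (Hcl := J_close X DA A c y HA Hs Hc Dy).
  assert (Hq : hnorm (A y) / c <= eps / 3).
  { unfold Rdiv. apply Rmult_le_reg_l with c; auto. rewrite <- Rmult_assoc, (Rmult_comm c (hnorm (A y))), Rmult_assoc, Rinv_r, Rmult_1_r by lra.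
    unfold C in Hcc. assert (3 * hnorm (A y) / eps * eps = 3 * hnorm (A y)) by (field; lra).
    assert (hnorm (A y) <= c * (eps/3)); [|lra].
    apply Rmult_le_reg_l with 3. lra. replace (3 * (c * (eps/3))) with (c * eps) by field.
    rewrite <- H. apply Rmult_le_compat_r; lra. }
  apply nrm_le_of. lra. intro v.
  replace (hinner (hsub (Jop X DA A c w) w) v) with
    (hinner (hsub w y) (Jop X DA A c v) + hinner (hsub (Jop X DA A c y) y) v - hinner (hsub w y) v).
  2:{ ipE. rewrite <- !(J_sym X DA A c) by auto. ring. }
  unfold Rminus. eapply Rle_trans. apply Rabs_triang. rewrite Rabs_Ropp.
  eapply Rle_trans. apply Rplus_le_compat_r. apply Rabs_triang.
  assert (B1 : Rabs (hinner (hsub w y) (Jop X DA A c v)) <= eps/3 * hnorm v).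
  { eapply Rle_trans. apply cs. apply Rmult_le_compat; try apply nrm_ge0. lra. apply J_bd; auto. }
  assert (B2 : Rabs (hinner (hsub (Jop X DA A c y) y) v) <= eps/3 * hnorm v).
  { eapply Rle_trans. apply cs. apply Rmult_le_compat_r. apply nrm_ge0. lra. }
  assert (B3 : Rabs (hinner (hsub w y) v) <= eps/3 * hnorm v).
  { eapply Rle_trans. apply cs. apply Rmult_le_compat_r. apply nrm_ge0. lra. }
  lra.
Qed.


Lemma DA_DB (X : RHilbert) (DA : X -> Prop) (A : X -> X) (DB : X -> Prop) (B : X -> X) x :
  is_sqrt_op DA A DB B -> DA x -> DB x.
Proof. intros [_ [Hd _]] Dx. apply Hd; auto. Qed.

Lemma A_energy (X : RHilbert) (DA : X -> Prop) (A : X -> X) (DB : X -> Prop) (B : X -> X) z :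
  is_sqrt_op DA A DB B -> DA z -> hinner (A z) z = hinner (B z) (B z).
Proof.
  intros [[_ [_ [_ [Hsym _]]]] [Hd Hsq]] Dz. destruct (proj1 (Hd z) Dz) as [D1 D2].
  rewrite <- Hsq by auto. apply Hsym; auto.
Qed.

Lemma weak_B (X : RHilbert) (DA : X -> Prop) (A : X -> X) (DB : X -> Prop) (B : X -> X) x y :
  is_sqrt_op DA A DB B -> DB x -> DA y -> hinner (B x) (B y) = hinner x (A y).
Proof.
  intros [[_ [_ [_ [Hsym _]]]] [Hd Hsq]] Dx Dy. destruct (proj1 (Hd y) Dy) as [D1 D2].
  rewrite Hsym by auto. rewrite Hsq; auto.
Qed.

Lemma J_B (X : RHilbert) (DA : X -> Prop) (A : X -> X) (DB : X -> Prop) (B : X -> X) c x :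
  nonneg_self_adjoint DA A -> discrete_point_spectrum DA A -> is_sqrt_op DA A DB B -> 0 < c -> DB x ->
  B (Jop X DA A c x) = Jop X DA A c (B x).
Proof.
  intros HA Hs HB Hc Dx.
  destruct (J_spec X DA A c x HA Hs Hc) as [Dz Sz]. set (z := Jop X DA A c x) in *.
  assert (HB' := HB). destruct HB' as [[HsubB [_ [HlinB _]]] [Hd Hsq]].
  destruct (proj1 (Hd z) Dz) as [Dz1 Dz2].
  assert (EAz : A z = hsub (hscal c x) (hscal c z)).
  { apply ext_ip. intro v. rewrite Sz. ipE. ring. }
  assert (Dcx : DB (hscal c x)) by (apply HsubB; auto).
  assert (Dcz : DB (hscal c z)) by (apply HsubB; auto).
  destruct (lin_sub X DB B _ _ HsubB HlinB Dcx Dcz) as [DAz BAz].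
  rewrite <- EAz in DAz, BAz.
  assert (DAy : DA (B z)). { apply Hd. split; auto. rewrite Hsq; auto. }
  apply (J_unique X DA A c (B x)); auto.
  - split; auto. intro v. rewrite <- (Hsq (B z) DAy). rewrite (Hsq z Dz). rewrite BAz.
    destruct HlinB as [_ Hls]. rewrite !Hls by auto. ipE. ring.
  - apply J_spec; auto.
Qed.

Lemma J_conv_sq (X : RHilbert) (DA : X -> Prop) (A : X -> X) w :
  nonneg_self_adjoint DA A -> discrete_point_spectrum DA A ->
  forall eps, 0 < eps -> exists C, 0 < C /\ forall c, C <= c ->
    Rabs (hinner (Jop X DA A c w) (Jop X DA A c w) - hinner w w) <= eps.
Proof.
  intros HA Hs eps He. set (r := Rmin 1 (eps / (1 + 2 * hnorm w))).
  assert (Hw := nrm_ge0 X w).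
  assert (Hr : 0 < r) by (apply Rmin_pos; [lra| apply Rdiv_lt_0_compat; lra]).
  destruct (J_conv X DA A w HA Hs r Hr) as [C [HC H1]]. exists C; split; auto.
  intros c Hc. specialize (H1 c Hc). set (a := Jop X DA A c w) in *.
  replace (hinner a a - hinner w w) with (hinner (hsub a w) (hsub a w) + 2 * hinner (hsub a w) w)
    by (ipE; rewrite (hinner_sym _ w a); ring).
  rewrite <- nrm_sq. eapply Rle_trans. apply Rabs_triang.
  assert (Hn := nrm_ge0 X (hsub a w)).
  rewrite Rabs_right by (apply Rle_ge, Rmult_le_pos; auto).
  rewrite Rabs_mult, Rabs_right by lra.
  assert (Hc1 := cs X (hsub a w) w).
  assert (r1 : r <= 1) by apply Rmin_l. assert (r2 : r <= eps / (1 + 2 * hnorm w)) by apply Rmin_r.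
  assert (r3 : r * (1 + 2 * hnorm w) <= eps).
  { apply Rle_trans with (eps / (1 + 2 * hnorm w) * (1 + 2 * hnorm w)).
    apply Rmult_le_compat_r; lra. right; field; lra. }
  nra.
Qed.

Lemma Cn_add (X : RHilbert) (f g : R -> X) t : Cn X f t -> Cn X g t -> Cn X (fun s => hadd (f s) (g s)) t.
Proof.
  intros Hf Hg. apply Cn_of_ip. intros eps He.
  destruct (Cn_ip X f t Hf (eps/2)) as [d1 [Hd1 H1]]. lra.
  destruct (Cn_ip X g t Hg (eps/2)) as [d2 [Hd2 H2]]. lra.
  exists (Rmin d1 d2); split. apply Rmin_pos; lra. intros s Hs w.
  assert (s1 : Rabs (s - t) < d1) by (eapply Rlt_le_trans; [apply Hs| apply Rmin_l]).
  assert (s2 : Rabs (s - t) < d2) by (eapply Rlt_le_trans; [apply Hs| apply Rmin_r]).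
  specialize (H1 s s1 w). specialize (H2 s s2 w). ipE.
  replace (hinner (f s) w + hinner (g s) w - (hinner (f t) w + hinner (g t) w)) with
    ((hinner (f s) w - hinner (f t) w) + (hinner (g s) w - hinner (g t) w)) by ring.
  eapply Rle_trans. apply Rabs_triang. lra.
Qed.

Lemma Cn_scal (X : RHilbert) (f : R -> X) k t : Cn X f t -> Cn X (fun s => hscal k (f s)) t.
Proof.
  intros Hf. apply Cn_of_ip. intros eps He.
  destruct (Cn_ip X f t Hf (eps/(Rabs k + 1))) as [d1 [Hd1 H1]].
  apply Rdiv_lt_0_compat; [lra| assert (0 <= Rabs k) by apply Rabs_pos; lra].
  exists d1; split; auto. intros s Hs w. specialize (H1 s Hs w). ipE.
  rewrite <- Rmult_minus_distr_l, Rabs_mult.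
  assert (Hk := Rabs_pos k). assert (Hw := nrm_ge0 X w).
  apply Rle_trans with (Rabs k * (eps / (Rabs k + 1) * hnorm w)).
  apply Rmult_le_compat_l; auto.
  apply Rle_trans with ((Rabs k + 1) * (eps / (Rabs k + 1) * hnorm w)).
  apply Rmult_le_compat_r. apply Rmult_le_pos; auto. apply Rlt_le, Rdiv_lt_0_compat; lra. lra.
  right. field. lra.
Qed.

Lemma Cn_sub (X : RHilbert) (f g : R -> X) t : Cn X f t -> Cn X g t -> Cn X (fun s => hsub (f s) (g s)) t.
Proof.
  intros Hf Hg. unfold hsub.
  assert (Cn X (fun s => hopp (g s)) t).
  { apply Cn_of_ip. intros eps He. destruct (Cn_ip X g t Hg eps He) as [d [Hd H1]].
    exists d; split; auto. intros s Hs w. ipE. rewrite <- Rabs_Ropp.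
    replace (- (- hinner (g s) w - - hinner (g t) w)) with (hinner (g s) w - hinner (g t) w) by ring. auto. }
  apply (Cn_add X f (fun s => hopp (g s))); auto.
Qed.


Definition Setting (X : RHilbert) (DA : X -> Prop) (A : X -> X) (DB : X -> Prop) (B : X -> X)
  (delta : R) (u du g : R -> X) : Prop :=
  nonneg_self_adjoint DA A /\ is_sqrt_op DA A DB B /\ discrete_point_spectrum DA A /\
  (forall t, 0 <= t -> DB (u t)) /\ hcont_pos u /\ hcont_pos (fun t => B (u t)) /\
  (forall t, 0 <= t -> hderiv_pos u (du t) t) /\ hcont_pos du /\ hcont_pos g /\
  (forall v, DB v -> forall t, 0 < t ->
       derivable_pt_lim (fun s => hinner (du s) v) t
         (hinner (g t) v - 2 * delta * hinner (du t) v - hinner (B (u t)) (B v))).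

Lemma dpl_plus f g x a b : derivable_pt_lim f x a -> derivable_pt_lim g x b ->
  derivable_pt_lim (fun s => f s + g s) x (a + b).
Proof. intros; apply (derivable_pt_lim_plus f g x a b); auto. Qed.
Lemma dpl_minus f g x a b : derivable_pt_lim f x a -> derivable_pt_lim g x b ->
  derivable_pt_lim (fun s => f s - g s) x (a - b).
Proof. intros; apply (derivable_pt_lim_minus f g x a b); auto. Qed.
Lemma dpl_scal f k x a : derivable_pt_lim f x a ->
  derivable_pt_lim (fun s => k * f s) x (k * a).
Proof. intros; apply (derivable_pt_lim_scal f k x a); auto. Qed.
Lemma dpl_mult f g x a b : derivable_pt_lim f x a -> derivable_pt_lim g x b ->
  derivable_pt_lim (fun s => f s * g s) x (a * g x + f x * b).
Proof. intros; apply (derivable_pt_lim_mult f g x a b); auto. Qed.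

Definition hvec (X : RHilbert) (DA : X -> Prop) (A : X -> X) (delta c : R) (u du g : R -> X) (s : R) : X :=
  hadd (hsub (Jop X DA A c (g s)) (hscal (2*delta) (Jop X DA A c (du s))))
       (hscal c (hsub (Jop X DA A c (u s)) (u s))).

Lemma y_deriv X DA A DB B delta u du g c sg :
  Setting X DA A DB B delta u du g -> 0 < c -> 0 < sg ->
  Dv X (fun s => Jop X DA A c (du s)) (hvec X DA A delta c u du g sg) sg.
Proof.
  intros HS Hc Hsg.
  destruct HS as [HA [HB [Hs [HDu [Hcu [HcBu [Hdu [Hcdu [Hcg Hweak]]]]]]]]].
  assert (Js : forall a w, hinner (Jop X DA A c a) w = hinner a (Jop X DA A c w)) by (intros; apply J_sym; auto).
  assert (Jb : forall w, hnorm (Jop X DA A c w) <= hnorm w) by (intros; apply J_bd; auto).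
  apply Dv_of_weak with (r := sg/2). lra.
  - intros s Hs' w. apply Rabs_def2 in Hs'.
    assert (Hs0 : 0 < s) by lra.
    assert (E : (fun z => hinner (Jop X DA A c (du z)) w) = (fun z => hinner (du z) (Jop X DA A c w)))
      by (apply functional_extensionality; intro; apply Js).
    rewrite E.
    destruct (J_spec X DA A c w HA Hs Hc) as [Dw Sw].
    assert (DBw : DB (Jop X DA A c w)) by (apply (DA_DB X DA A DB B); auto).
    replace (hinner (hvec X DA A delta c u du g s) w) with
      (hinner (g s) (Jop X DA A c w) - 2 * delta * hinner (du s) (Jop X DA A c w)
        - hinner (B (u s)) (B (Jop X DA A c w))).
    apply Hweak; auto.
    rewrite (weak_B X DA A DB B) by (auto; apply HDu; lra).
    rewrite (hinner_sym _ (u s) (A (Jop X DA A c w))), Sw. unfold hvec. ipE. rewrite !Js. rewrite <- (Js w (u s)), (hinner_sym _ (Jop X DA A c w) (u s)), (hinner_sym _ w (u s)). ring.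

  - unfold hvec. apply Cn_add. apply Cn_sub. apply Cn_L; auto. apply cont_pos_Cn; auto.
    apply Cn_scal. apply Cn_L; auto. apply cont_pos_Cn; auto.
    apply Cn_scal. apply Cn_sub. apply Cn_L; auto. apply cont_pos_Cn; auto. apply cont_pos_Cn; auto.
Qed.


Definition Ereg (X : RHilbert) (DA : X -> Prop) (A : X -> X) (c mu : R) (u du : R -> X) (s : R) : R :=
  hinner (Jop X DA A c (du s)) (Jop X DA A c (du s)) + c * hinner (u s) (Jop X DA A c (u s))
  - c * hinner (Jop X DA A c (u s)) (Jop X DA A c (u s))
  + mu * hinner (Jop X DA A c (u s)) (Jop X DA A c (u s)).

Lemma Ereg_deriv X DA A DB B delta u du g c mu sg :
  Setting X DA A DB B delta u du g -> 0 < c -> 0 < sg ->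
  derivable_pt_lim (Ereg X DA A c mu u du) sg
    (2 * hinner (Jop X DA A c (g sg)) (Jop X DA A c (du sg))
     - 4 * delta * hinner (Jop X DA A c (du sg)) (Jop X DA A c (du sg))
     + 2 * mu * hinner (Jop X DA A c (du sg)) (Jop X DA A c (u sg))).
Proof.
  intros HS Hc Hsg.
  assert (Dy := y_deriv X DA A DB B delta u du g c sg HS Hc Hsg).
  destruct HS as [HA [HB [Hs [HDu [Hcu [HcBu [Hdu [Hcdu [Hcg Hweak]]]]]]]]].
  assert (Js : forall a w, hinner (Jop X DA A c a) w = hinner a (Jop X DA A c w)) by (intros; apply J_sym; auto).
  assert (Jb : forall w, hnorm (Jop X DA A c w) <= hnorm w) by (intros; apply J_bd; auto).
  assert (Du : Dv X u (du sg) sg) by (apply deriv_pos_Dv; auto; apply Hdu; lra).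
  assert (Dz : Dv X (fun s => Jop X DA A c (u s)) (Jop X DA A c (du sg)) sg) by (apply Dv_L; auto).
  assert (Cz : Cn X (fun s => Jop X DA A c (u s)) sg) by (apply Cn_L; auto; apply cont_pos_Cn; auto).
  assert (Cy : Cn X (fun s => Jop X DA A c (du s)) sg) by (apply Cn_L; auto; apply cont_pos_Cn; auto).
  assert (P1 := Dv_ip X _ _ _ _ sg Dy Dy Cy).
  assert (P2 := Dv_ip X _ _ _ _ sg Du Dz Cz).
  assert (P3 := Dv_ip X _ _ _ _ sg Dz Dz Cz).
  assert (H := dpl_plus _ _ _ _ _ (dpl_minus _ _ _ _ _ (dpl_plus _ _ _ _ _ P1 (dpl_scal _ c _ _ P2))
                   (dpl_scal _ c _ _ P3)) (dpl_scal _ mu _ _ P3)).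
  unfold Ereg. simpl in H.
  match type of H with derivable_pt_lim _ _ ?l => replace (2 * _ - _ + _) with l; [exact H|] end.
  unfold hvec. ipE.
  rewrite (hinner_sym _ (Jop X DA A c (du sg)) (Jop X DA A c (g sg))),
    (hinner_sym _ (Jop X DA A c (u sg)) (Jop X DA A c (du sg))),
    (hinner_sym _ (u sg) (Jop X DA A c (du sg))), (Js (du sg) (u sg)).
  ring.
Qed.

Lemma Rabs_le_inv a b : Rabs a <= b -> - b <= a <= b.
Proof. unfold Rabs; destruct (Rcase_abs a); lra. Qed.

Lemma Ereg_parts X DA A DB B delta u du g c s :
  Setting X DA A DB B delta u du g -> 0 < c -> 0 <= s ->
  0 <= c * hinner (u s) (Jop X DA A c (u s)) - c * hinner (Jop X DA A c (u s)) (Jop X DA A c (u s)) /\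
  c * hinner (u s) (Jop X DA A c (u s)) - c * hinner (Jop X DA A c (u s)) (Jop X DA A c (u s))
   = hinner (Jop X DA A c (B (u s))) (Jop X DA A c (B (u s))).
Proof.
  intros HS Hc Hs0.
  destruct HS as [HA [HB [Hs [HDu [Hcu [HcBu [Hdu [Hcdu [Hcg Hweak]]]]]]]]].
  destruct (J_spec X DA A c (u s) HA Hs Hc) as [Dz Sz].
  assert (E1 := Sz (Jop X DA A c (u s))).
  assert (HA' := HA). destruct HA' as [_ [_ [_ [_ [_ Hnn]]]]].
  split.
  - rewrite <- E1. apply Hnn; auto.
  - rewrite <- E1. rewrite (A_energy X DA A DB B) by auto.
    rewrite (J_B X DA A DB B) by (auto; apply HDu; auto). reflexivity.
Qed.

Lemma Ed_bound X DA A DB B delta u du g c mu a G sg :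
  Setting X DA A DB B delta u du g -> 0 < c -> 0 <= sg -> 0 < delta -> 4 * delta <= a ->
  0 <= mu -> mu <= 4 * delta * (a - 4 * delta) -> hnorm (g sg) <= G ->
  0 <= Ereg X DA A c mu u du sg /\
  2 * hinner (Jop X DA A c (g sg)) (Jop X DA A c (du sg))
     - 4 * delta * hinner (Jop X DA A c (du sg)) (Jop X DA A c (du sg))
     + 2 * mu * hinner (Jop X DA A c (du sg)) (Jop X DA A c (u sg))
  >= - a * Ereg X DA A c mu u du sg - 2 * G * sqrt (Ereg X DA A c mu u du sg).
Proof.
  intros HS Hc Hsg Hd Ha Hmu Hmu2 HG.
  destruct (Ereg_parts X DA A DB B delta u du g c sg HS Hc Hsg) as [HP _].
  destruct HS as [HA [HB [Hs [HDu [Hcu [HcBu [Hdu [Hcdu [Hcg Hweak]]]]]]]]].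
  set (y := Jop X DA A c (du sg)) in *. set (z := Jop X DA A c (u sg)) in *.
  set (P := c * hinner (u sg) z - c * hinner z z) in *.
  assert (EE : Ereg X DA A c mu u du sg = hnorm y * hnorm y + P + mu * (hnorm z * hnorm z)).
  { unfold Ereg. fold y z. rewrite !nrm_sq. unfold P. ring. }
  set (Y := hnorm y) in *. set (Z := hnorm z) in *.
  assert (HY : 0 <= Y) by apply nrm_ge0. assert (HZ : 0 <= Z) by apply nrm_ge0.
  assert (HmZ : 0 <= mu * (Z * Z)) by (apply Rmult_le_pos; nra).
  assert (HYY : 0 <= Y * Y) by (apply Rmult_le_pos; auto). assert (HE0 : 0 <= Ereg X DA A c mu u du sg) by (rewrite EE; lra).
  split; auto.
  assert (Hsq : Y <= sqrt (Ereg X DA A c mu u du sg)).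
  { rewrite <- (sqrt_square Y) by auto. apply sqrt_le_1_alt. rewrite EE. nra. }
  assert (H1 : Rabs (hinner (Jop X DA A c (g sg)) y) <= G * Y).
  { eapply Rle_trans. apply cs. apply Rmult_le_compat_r; auto.
    eapply Rle_trans. apply J_bd; auto. auto. }
  assert (H2 : Rabs (hinner y z) <= Y * Z) by apply cs.
  apply Rabs_le_inv in H1. apply Rabs_le_inv in H2.
  rewrite <- (nrm_sq X y). fold Y.
  assert (HG0 : 0 <= G) by (eapply Rle_trans; [apply nrm_ge0| apply HG]). clearbody Y Z P y z.
  assert (K1 : 8 * delta * mu * Y * Z <= mu * (Y * Y) + 16 * delta * delta * mu * (Z * Z)).
  { assert (0 <= mu * ((Y - 4 * delta * Z) * (Y - 4 * delta * Z))) by (apply Rmult_le_pos; [lra| apply Rle_0_sqr]). nra. }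
  assert (K2 : 2 * mu * Y * Z <= (a - 4 * delta) * (Y * Y) + a * mu * (Z * Z)).
  { apply Rmult_le_reg_l with (4 * delta). lra.
    assert (mu * (Y * Y) <= 4 * delta * ((a - 4*delta) * (Y*Y))) by nra.
    assert (16 * delta * delta * mu * (Z*Z) <= 4 * delta * (a * mu * (Z * Z))) by nra.
    nra. }
  assert (K3 : G * Y <= G * sqrt (Ereg X DA A c mu u du sg)) by (apply Rmult_le_compat_l; auto).
  assert (K4 : - (mu * (Y * Z)) <= mu * hinner y z) by (destruct H2 as [H2 _]; apply Rmult_le_compat_l with (r := mu) in H2; lra).
  assert (K5 : - (G * Y) <= hinner (Jop X DA A c (g sg)) y) by lra.
  assert (K6 : 0 <= a * P) by (apply Rmult_le_pos; lra).
  rewrite EE in K3 |- *. lra.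
Qed.

Lemma dpl_sqrt f x l : derivable_pt_lim f x l -> 0 < f x ->
  derivable_pt_lim (fun s => sqrt (f s)) x (l / (2 * sqrt (f x))).
Proof.
  intros H Hp. assert (H2 := derivable_pt_lim_comp f sqrt x l _ H (derivable_pt_lim_sqrt _ Hp)).
  unfold comp in H2. replace (l / (2 * sqrt (f x))) with (/ (2 * sqrt (f x)) * l) by (unfold Rdiv; ring). exact H2.
Qed.

Lemma dpl_const_plus f x l k : derivable_pt_lim f x l -> derivable_pt_lim (fun s => f s + k) x l.
Proof.
  intro H. replace l with (l + 0) by ring. apply dpl_plus; auto. apply (derivable_pt_lim_const k x).
Qed.

Lemma dpl_expl k x : derivable_pt_lim (fun s => exp (k * s)) x (k * exp (k * x)).
Proof.
  assert (H1 : derivable_pt_lim (fun s => k * s) x (k * 1)).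
  { apply dpl_scal. apply derivable_pt_lim_id. }
  assert (H2 := derivable_pt_lim_comp _ exp x _ _ H1 (derivable_pt_lim_exp (k * x))).
  unfold comp in H2. replace (k * exp (k * x)) with (exp (k * x) * (k * 1)) by ring. exact H2.
Qed.

Lemma reg_mono X DA A DB B delta u du g c mu a G eta t h :
  Setting X DA A DB B delta u du g -> 0 < c -> 0 < t -> 0 < h -> 0 < delta -> 4 * delta <= a ->
  0 <= mu -> mu <= 4 * delta * (a - 4 * delta) -> 0 < eta ->
  (forall s, t <= s <= t + h -> hnorm (g s) <= G) ->
  (sqrt (Ereg X DA A c mu u du t + eta) + 2 * G / a) * exp (a / 2 * t) <=
  (sqrt (Ereg X DA A c mu u du (t + h) + eta) + 2 * G / a) * exp (a / 2 * (t + h)).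
Proof.
  intros HS Hc Ht Hh Hd Ha Hmu Hmu2 Heta HG.
  set (E0 := Ereg X DA A c mu u du).
  set (Ed := fun s => 2 * hinner (Jop X DA A c (g s)) (Jop X DA A c (du s))
     - 4 * delta * hinner (Jop X DA A c (du s)) (Jop X DA A c (du s))
     + 2 * mu * hinner (Jop X DA A c (du s)) (Jop X DA A c (u s))).
  set (F := fun s => (sqrt (E0 s + eta) + 2 * G / a) * exp (a / 2 * s)).
  set (F' := fun s => (Ed s / (2 * sqrt (E0 s + eta))) * exp (a / 2 * s) +
                      (sqrt (E0 s + eta) + 2 * G / a) * (a / 2 * exp (a / 2 * s))).
  assert (HE0 : forall s, t <= s <= t + h -> 0 <= E0 s /\ Ed s >= - a * E0 s - 2 * G * sqrt (E0 s)).
  { intros s Hs. apply (Ed_bound X DA A DB B delta u du g c mu a G s); auto; try lra. }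
  assert (HD : forall s, t <= s <= t + h -> derivable_pt_lim F s (F' s)).
  { intros s Hs. unfold F, F'. cbv beta.
    assert (Hp : 0 < E0 s + eta) by (destruct (HE0 s Hs); lra).
    apply (dpl_mult (fun z => sqrt (E0 z + eta) + 2*G/a) (fun z => exp (a/2*z))).
    - apply dpl_const_plus. apply (dpl_sqrt (fun z => E0 z + eta)); auto.
      apply dpl_const_plus. apply (Ereg_deriv X DA A DB B delta u du g c mu s); auto; lra.
    - apply dpl_expl. }
  destruct (MVT_cor2 F F' t (t + h)) as [s [Es Hs]]. lra. auto.
  fold E0. change ((fun s => (sqrt (E0 s + eta) + 2 * G / a) * exp (a / 2 * s)) t <=
                   (fun s => (sqrt (E0 s + eta) + 2 * G / a) * exp (a / 2 * s)) (t + h)).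
  fold F. assert (F' s >= 0); [| nra].
  destruct (HE0 s (conj (Rlt_le _ _ (proj1 Hs)) (Rlt_le _ _ (proj2 Hs)))) as [H0 H1].
  unfold F'. set (ex := exp (a / 2 * s)). assert (Hex : 0 < ex) by apply exp_pos.
  set (Sq := sqrt (E0 s + eta)).
  assert (HSq : 0 < Sq) by (apply sqrt_lt_R0; lra).
  assert (HSq2 : Sq * Sq = E0 s + eta) by (apply sqrt_sqrt; lra).
  assert (HSq3 : sqrt (E0 s) <= Sq) by (apply sqrt_le_1_alt; lra).
  assert (HG0 : 0 <= G).
  { eapply Rle_trans. apply nrm_ge0. apply (HG t). lra. }
  assert (Hinner : Ed s / (2 * Sq) + (Sq + 2 * G / a) * (a / 2) >= 0).
  { assert (Hk : Ed s / (2 * Sq) + (Sq + 2 * G / a) * (a / 2) =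
        (Ed s + a * (Sq * Sq) + 2 * G * Sq) / (2 * Sq)) by (field; lra).
    rewrite Hk. apply Rle_ge. apply Rmult_le_pos; [|apply Rlt_le, Rinv_0_lt_compat; lra].
    rewrite HSq2. assert (G * sqrt (E0 s) <= G * Sq) by (apply Rmult_le_compat_l; auto).
    assert (0 <= a * eta) by (apply Rmult_le_pos; lra). lra. }
  replace (Ed s / (2 * Sq) * ex + (Sq + 2 * G / a) * (a / 2 * ex)) with
    ((Ed s / (2 * Sq) + (Sq + 2 * G / a) * (a / 2)) * ex) by ring.
  apply Rle_ge, Rmult_le_pos; lra.
Qed.

Lemma le_of_forall_eps x y : (forall z, 0 < z -> x <= y + z) -> x <= y.
Proof. intro H. destruct (Rle_or_lt x y); auto. specialize (H ((x - y)/2)). lra. Qed.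

Lemma sqrt_add_le x y : 0 <= x -> 0 <= y -> sqrt (x + y) <= sqrt x + sqrt y.
Proof.
  intros Hx Hy. rewrite <- (sqrt_square (sqrt x + sqrt y)).
  2:{ assert (0 <= sqrt x) by apply sqrt_pos. assert (0 <= sqrt y) by apply sqrt_pos. lra. }
  apply sqrt_le_1_alt.
  assert (sqrt x * sqrt x = x) by (apply sqrt_sqrt; auto).
  assert (sqrt y * sqrt y = y) by (apply sqrt_sqrt; auto).
  assert (0 <= sqrt x * sqrt y) by (apply Rmult_le_pos; apply sqrt_pos). nra.
Qed.

Lemma mono_sup (phi : R -> R) T1 T2 : T1 <= T2 ->
  (forall t, T1 <= t <= T2 -> continuity_pt phi t) ->
  (forall t, T1 <= t < T2 -> forall eps, 0 < eps -> exists h0, 0 < h0 /\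
      forall h, 0 < h < h0 -> phi (t + h) >= phi t - eps * h) ->
  phi T1 <= phi T2.
Proof.
  intros H12 Hc Hd.
  assert (Hmain : forall eps, 0 < eps -> phi T2 >= phi T1 - eps * (T2 - T1) - eps).
  { intros eps He.
    set (psi := fun s => phi s + eps * (s - T1) - phi T1).
    set (P := fun t => T1 <= t <= T2 /\ forall s, T1 <= s <= t -> psi s >= - eps).
    assert (HP1 : P T1).
    { split. lra. intros s Hs. replace s with T1 by lra. unfold psi. lra. }
    assert (Hb : bound P). { exists T2. intros x [Hx _]. lra. }
    destruct (completeness P Hb (ex_intro _ T1 HP1)) as [m [Hub Hlub]].
    assert (Hm1 : T1 <= m) by (apply Hub; auto).
    assert (Hm2 : m <= T2). { apply Hlub. intros x [Hx _]. lra. }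
    assert (C1 : forall s, T1 <= s < m -> psi s >= - eps).
    { intros s Hs. destruct (classic (exists t, P t /\ s < t)) as [[t [Pt Hst]]|Hn].
      - destruct Pt as [_ Pt]. apply Pt. lra.
      - exfalso. assert (m <= s). { apply Hlub. intros x Px. apply Rnot_lt_le. intro. apply Hn. exists x; auto. }
        lra. }
    assert (Hcpsi : forall t, T1 <= t <= T2 -> continuity_pt psi t).
    { intros t Ht. unfold psi. apply continuity_pt_minus. apply continuity_pt_plus. apply Hc; auto.
      apply continuity_pt_mult. apply continuity_pt_const. intros x y; auto.
      apply continuity_pt_minus. apply derivable_continuous_pt, derivable_pt_id.
      apply continuity_pt_const. intros x y; auto. apply continuity_pt_const. intros x y; auto. }
    assert (C2 : psi m >= - eps).
    { apply Rnot_lt_ge. intro Hlt.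
      destruct (Req_dec m T1) as [Em|Em].
      - subst m. unfold psi in Hlt. lra.
      - assert (Hcm := Hcpsi m (conj Hm1 Hm2)).
        unfold continuity_pt, continue_in, limit1_in, limit_in in Hcm. simpl in Hcm.
        destruct (Hcm (- eps - psi m)) as [d [Hd0 Hd1]]. lra.
        set (s := Rmax T1 (m - d/2)).
        assert (Hs1 : T1 <= s) by apply Rmax_l. assert (Hs2 : m - d/2 <= s) by apply Rmax_r.
        assert (Hs3 : s < m). { unfold s. apply Rmax_lub_lt; lra. }
        assert (Hq := C1 s (conj Hs1 Hs3)).
        assert (Hq2 : R_dist (psi s) (psi m) < - eps - psi m).
        { apply Hd1. split. unfold D_x, no_cond. split; auto. lra. unfold R_dist. apply Rabs_def1; lra. }
        unfold R_dist in Hq2. apply Rabs_def2 in Hq2. lra. }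
    assert (C3 : m = T2).
    { destruct (Req_dec m T2) as [|Hne]; auto. exfalso.
      destruct (Hd m (conj Hm1 (ltac:(lra) : m < T2)) eps He) as [h0 [Hh0 Hh1]].
      set (t' := Rmin (m + h0/2) T2).
      assert (Ht'1 : m < t'). { unfold t'. apply Rmin_glb_lt; [lra|]. destruct Hm2; auto. contradiction. }
      assert (Ht'2 : t' <= m + h0/2) by apply Rmin_l. assert (Ht'3 : t' <= T2) by apply Rmin_r.
      assert (Pt' : P t').
      { split. lra. intros s Hs. destruct (Rlt_or_le s m) as [Hsm|Hsm]. apply C1; lra.
        destruct (Req_dec s m) as [Esm|Esm]. subst; auto.
        assert (Hh := Hh1 (s - m)). replace (m + (s - m)) with s in Hh by ring.
        unfold psi in *. assert (phi s >= phi m - eps * (s - m)) by (apply Hh; lra). lra. }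
      assert (t' <= m) by (apply Hub; auto). lra. }
    subst m. assert (psi T2 >= - eps) by (apply C2). unfold psi in H. lra. }
  apply Rnot_lt_le. intro Hlt.
  set (eps := (phi T1 - phi T2) / (2 * (T2 - T1 + 1))).
  assert (He : 0 < eps) by (apply Rdiv_lt_0_compat; lra).
  assert (H := Hmain eps He).
  assert (eps * (T2 - T1 + 1) = (phi T1 - phi T2) / 2) by (unfold eps; field; lra). nra.
Qed.

Lemma real_dini (S : R -> R) b t :
  0 <= b -> 0 <= S t ->
  (forall e', 0 < e' -> exists h0, 0 < h0 /\ forall h, 0 < h < h0 ->
      0 <= S (t + h) /\ S (t + h) >= S t - (b * S t + e') * h) ->
  forall eps, 0 < eps -> exists h0, 0 < h0 /\ forall h, 0 < h < h0 ->
    S (t + h) * exp (b * (t + h)) >= S t * exp (b * t) - eps * h.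
Proof.
  intros Hb HS0 H eps He.
  set (e := exp (b * t)). assert (He0 : 0 < e) by apply exp_pos.
  set (e' := eps / (2 * e)). assert (He' : 0 < e') by (apply Rdiv_lt_0_compat; lra).
  destruct (H e' He') as [h1 [Hh1 Hh2]].
  set (M := (b * S t + e') * b + 1).
  assert (HM : 0 < M). { unfold M. assert (0 <= (b * S t + e') * b) by (apply Rmult_le_pos; nra). lra. }
  set (h0 := Rmin h1 (Rmin (/ (2 * b + 1)) (eps / (2 * e * M)))).
  assert (Hi : 0 < / (2 * b + 1)) by (apply Rinv_0_lt_compat; lra).
  assert (Hj : 0 < eps / (2 * e * M)) by (apply Rdiv_lt_0_compat; [lra| apply Rmult_lt_0_compat; lra]).
  exists h0. split. unfold h0. repeat apply Rmin_pos; lra.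
  intros h Hh.
  assert (hh1 : h < h1) by (eapply Rlt_le_trans; [apply Hh| apply Rmin_l]).
  assert (hh2 : h < / (2 * b + 1)) by (eapply Rlt_le_trans; [apply Hh| unfold h0; eapply Rle_trans; [apply Rmin_r| apply Rmin_l]]).
  assert (hh3 : h < eps / (2 * e * M)) by (eapply Rlt_le_trans; [apply Hh| unfold h0; eapply Rle_trans; [apply Rmin_r| apply Rmin_r]]).
  destruct (Hh2 h (conj (proj1 Hh) hh1)) as [HS1 HS2].
  rewrite Rmult_plus_distr_l, exp_plus. fold e.
  assert (Hx := exp_ineq1_le (b * h)).
  assert (hb : b * h <= 1/2).
  { apply Rmult_lt_compat_l with (r := 2 * b + 1) in hh2; [|lra].
    rewrite Rinv_r in hh2 by lra. nra. }
  assert (He'e : 2 * e * e' = eps) by (unfold e'; field; lra).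
  assert (hM : 2 * e * M * h <= eps).
  { apply Rmult_lt_compat_l with (r := 2 * e * M) in hh3; [|apply Rmult_lt_0_compat; lra].
    replace (2 * e * M * (eps / (2 * e * M))) with eps in hh3 by (field; lra). lra. }
  assert (Hexp0 : 0 < exp (b * h)) by apply exp_pos.
  destruct (Rle_or_lt 0 (S t - (b * S t + e') * h)) as [Hpos|Hneg].
  - assert (K1 : S (t + h) * (e * exp (b * h)) >= (S t - (b * S t + e') * h) * (e * (1 + b * h))).
    { apply Rle_ge. apply Rmult_le_compat.
      - lra.
      - apply Rmult_le_pos; nra.
      - lra.
      - apply Rmult_le_compat_l; lra. }
    assert (K2 : (S t - (b * S t + e') * h) * (e * (1 + b * h)) =
       S t * e - e * e' * h - e * (b * S t + e') * b * h * h) by ring.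
    assert (K3 : e * (b * S t + e') * b * h * h <= e * M * h * h).
    { assert (0 <= e * h * h) by (apply Rmult_le_pos; [apply Rmult_le_pos|]; lra).
      assert (Heq : e*M*h*h = e*(b*S t+e')*b*h*h + e*h*h) by (unfold M; ring). rewrite Heq. lra. }
    assert (K4 : e * M * h * h <= eps / 2 * h).
    { assert (e * M * h <= eps / 2) by lra. nra. }
    assert (K5 : e * e' * h = eps / 2 * h) by (rewrite <- He'e; field).
    lra.
  - assert (HSs : S t * (1 - b * h) < e' * h) by nra.
    assert (HSs2 : S t < 2 * e' * h) by nra.
    assert (0 <= S (t + h) * (e * exp (b * h))) by (apply Rmult_le_pos; [lra| apply Rmult_le_pos; lra]).
    assert (K6 : S t * e <= (2 * e' * h) * e) by (apply Rmult_le_compat_r; lra).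
    assert (K7 : (2 * e' * h) * e = eps * h) by (rewrite <- He'e; ring). lra.
Qed.

Definition Etrue (X : RHilbert) (B : X -> X) (mu : R) (u du : R -> X) (s : R) : R :=
  hinner (du s) (du s) + hinner (B (u s)) (B (u s)) + mu * hinner (u s) (u s).

Lemma Etrue_ge0 X B mu u du s : 0 <= mu -> 0 <= Etrue X B mu u du s.
Proof.
  intros Hm. unfold Etrue. assert (H1 := hinner_pos X (du s)). assert (H2 := hinner_pos X (B (u s))).
  assert (H3 := hinner_pos X (u s)). assert (0 <= mu * hinner (u s) (u s)) by (apply Rmult_le_pos; auto). lra.
Qed.

Lemma Ereg_to X DA A DB B delta u du g mu s :
  Setting X DA A DB B delta u du g -> 0 <= s -> 0 <= mu ->
  forall eta, 0 < eta -> exists C, 0 < C /\ forall c, C <= c ->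
    Rabs (Ereg X DA A c mu u du s - Etrue X B mu u du s) <= eta.
Proof.
  intros HS Hs Hmu eta Heta. assert (HS' := HS).
  destruct HS' as [HA [HB [Hsp [HDu [Hcu [HcBu [Hdu [Hcdu [Hcg Hweak]]]]]]]]].
  set (e := eta / (2 + mu)). assert (He : 0 < e) by (apply Rdiv_lt_0_compat; lra).
  destruct (J_conv_sq X DA A (du s) HA Hsp e He) as [C1 [HC1 H1]].
  destruct (J_conv_sq X DA A (B (u s)) HA Hsp e He) as [C2 [HC2 H2]].
  destruct (J_conv_sq X DA A (u s) HA Hsp e He) as [C3 [HC3 H3]].
  exists (Rmax C1 (Rmax C2 C3)). split. eapply Rlt_le_trans; [apply HC1| apply Rmax_l].
  intros c Hc.
  assert (c1 : C1 <= c) by (eapply Rle_trans; [apply Rmax_l| apply Hc]).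
  assert (c2 : C2 <= c) by (eapply Rle_trans; [eapply Rle_trans; [apply Rmax_l| apply Rmax_r]| apply Hc]).
  assert (c3 : C3 <= c) by (eapply Rle_trans; [eapply Rle_trans; [apply Rmax_r| apply Rmax_r]| apply Hc]).
  assert (Hc0 : 0 < c) by lra.
  destruct (Ereg_parts X DA A DB B delta u du g c s HS Hc0 Hs) as [_ EP].
  specialize (H1 c c1). specialize (H2 c c2). specialize (H3 c c3).
  unfold Ereg, Etrue.
  replace (hinner (Jop X DA A c (du s)) (Jop X DA A c (du s)) + c * hinner (u s) (Jop X DA A c (u s)) -
    c * hinner (Jop X DA A c (u s)) (Jop X DA A c (u s)) + mu * hinner (Jop X DA A c (u s)) (Jop X DA A c (u s)))
    with (hinner (Jop X DA A c (du s)) (Jop X DA A c (du s)) + hinner (Jop X DA A c (B (u s))) (Jop X DA A c (B (u s)))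
      + mu * hinner (Jop X DA A c (u s)) (Jop X DA A c (u s))) by (rewrite <- EP; ring).
  apply Rabs_le. apply Rabs_le_inv in H1. apply Rabs_le_inv in H2. apply Rabs_le_inv in H3.
  assert (Hm3 : - (mu * e) <= mu * (hinner (Jop X DA A c (u s)) (Jop X DA A c (u s)) - hinner (u s) (u s)) <= mu * e).
  { split; [replace (- (mu * e)) with (mu * (- e)) by ring|]; apply Rmult_le_compat_l; lra. }
  assert (Hee : e * (2 + mu) = eta) by (unfold e; field; lra).
  split; nra.
Qed.

Lemma dini_exp X DA A DB B delta u du g mu a t :
  Setting X DA A DB B delta u du g -> 0 < t -> 0 < delta -> 4 * delta <= a ->
  0 <= mu -> mu <= 4 * delta * (a - 4 * delta) ->
  forall e', 0 < e' -> exists h0, 0 < h0 /\ forall h, 0 < h < h0 ->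
   (sqrt (Etrue X B mu u du t) + 2 * (hnorm (g t) + e') / a) * exp (a / 2 * t) <=
   (sqrt (Etrue X B mu u du (t + h)) + 2 * (hnorm (g t) + e') / a) * exp (a / 2 * (t + h)).
Proof.
  intros HS Ht Hd Ha Hmu Hmu2 e' He'. assert (HS' := HS).
  destruct HS' as [HA [HB [Hsp [HDu [Hcu [HcBu [Hdu [Hcdu [Hcg Hweak]]]]]]]]].
  destruct (cont_pos_Cn X g t Hcg Ht e' He') as [d [Hd0 Hd1]].
  exists d. split; auto. intros h Hh.
  set (G := hnorm (g t) + e').
  assert (HG : forall s, t <= s <= t + h -> hnorm (g s) <= G).
  { intros s Hs. eapply Rle_trans. apply (nrm_tri_sub X (g s) (g t)). unfold G.
    assert (hnorm (hsub (g s) (g t)) <= e'); [|lra]. apply Hd1. apply Rabs_def1; lra. }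
  set (E1 := Etrue X B mu u du (t + h)). set (E0 := Etrue X B mu u du t).
  set (e1 := exp (a / 2 * (t + h))). assert (He1 : 0 < e1) by apply exp_pos.
  set (e0 := exp (a / 2 * t)). assert (He0 : 0 < e0) by apply exp_pos.
  assert (HE1 : 0 <= E1) by (apply Etrue_ge0; auto). assert (HE0 : 0 <= E0) by (apply Etrue_ge0; auto).
  apply le_of_forall_eps. intros z Hz.
  set (eta := (z / e1) * (z / e1) / 2).
  assert (Hzq : 0 < z / e1) by (apply Rdiv_lt_0_compat; lra).
  assert (Heta : 0 < eta) by (unfold eta; nra).
  assert (Hseta : sqrt (2 * eta) = z / e1).
  { replace (2 * eta) with ((z / e1) * (z / e1)) by (unfold eta; field; lra). apply sqrt_square. lra. }
  destruct (Ereg_to X DA A DB B delta u du g mu t HS (Rlt_le _ _ Ht) Hmu eta Heta) as [C1 [HC1 H1]].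
  destruct (Ereg_to X DA A DB B delta u du g mu (t + h) HS ltac:(lra) Hmu eta Heta) as [C2 [HC2 H2]].
  set (c := Rmax C1 C2).
  assert (c1 : C1 <= c) by apply Rmax_l. assert (c2 : C2 <= c) by apply Rmax_r.
  assert (Hc : 0 < c) by lra.
  specialize (H1 c c1). specialize (H2 c c2). apply Rabs_le_inv in H1. apply Rabs_le_inv in H2.
  assert (HM := reg_mono X DA A DB B delta u du g c mu a G eta t h HS Hc Ht (proj1 Hh) Hd Ha Hmu Hmu2 Heta HG).
  fold e0 e1 in HM. fold E0 E1 in H1, H2.
  set (R0 := Ereg X DA A c mu u du t) in *. set (R1 := Ereg X DA A c mu u du (t + h)) in *.
  assert (S0 : sqrt E0 <= sqrt (R0 + eta)) by (apply sqrt_le_1_alt; lra).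
  assert (S1 : sqrt (R1 + eta) <= sqrt E1 + sqrt (2 * eta)).
  { eapply Rle_trans. apply sqrt_le_1_alt with (y := E1 + 2 * eta). lra. apply sqrt_add_le; lra. }
  rewrite Hseta in S1.
  assert (HK : 0 <= 2 * G / a).
  { unfold G. assert (0 <= hnorm (g t)) by apply nrm_ge0. apply Rmult_le_pos. lra.
    apply Rlt_le, Rinv_0_lt_compat; lra. }
  assert (A1 : (sqrt E0 + 2 * G / a) * e0 <= (sqrt (R0 + eta) + 2 * G / a) * e0)
    by (apply Rmult_le_compat_r; lra).
  assert (A2 : (sqrt (R1 + eta) + 2 * G / a) * e1 <= (sqrt E1 + z / e1 + 2 * G / a) * e1)
    by (apply Rmult_le_compat_r; lra).
  assert (A3 : (sqrt E1 + z / e1 + 2 * G / a) * e1 = (sqrt E1 + 2 * G / a) * e1 + z) by (field; lra).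
  lra.
Qed.

Lemma dini_lin X DA A DB B delta u du g mu a t :
  Setting X DA A DB B delta u du g -> 0 < t -> 0 < delta -> 4 * delta <= a ->
  0 <= mu -> mu <= 4 * delta * (a - 4 * delta) ->
  forall e', 0 < e' -> exists h0, 0 < h0 /\ forall h, 0 < h < h0 ->
   sqrt (Etrue X B mu u du (t + h)) >=
     sqrt (Etrue X B mu u du t) - (a / 2 * sqrt (Etrue X B mu u du t) + hnorm (g t) + e') * h.
Proof.
  intros HS Ht Hd Ha Hmu Hmu2 e' He'.
  destruct (dini_exp X DA A DB B delta u du g mu a t HS Ht Hd Ha Hmu Hmu2 e' He') as [h0 [Hh0 H1]].
  exists h0; split; auto. intros h Hh. specialize (H1 h Hh).
  set (S0 := sqrt (Etrue X B mu u du t)) in *. set (S1 := sqrt (Etrue X B mu u du (t + h))) in *.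
  set (K := 2 * (hnorm (g t) + e') / a) in *.
  assert (HS0 : 0 <= S0) by apply sqrt_pos. assert (HS1 : 0 <= S1) by apply sqrt_pos.
  assert (Hgn : 0 <= hnorm (g t)) by apply nrm_ge0.
  assert (HK : 0 <= K) by (unfold K; apply Rmult_le_pos; [lra| apply Rlt_le, Rinv_0_lt_compat; lra]).
  assert (HaK : a / 2 * K = hnorm (g t) + e') by (unfold K; field; lra).
  rewrite Rmult_plus_distr_l, exp_plus in H1.
  set (e0 := exp (a / 2 * t)) in *. set (x := exp (a / 2 * h)) in *.
  assert (He0 : 0 < e0) by apply exp_pos. assert (Hx : 0 < x) by apply exp_pos.
  assert (H2 : S0 + K <= (S1 + K) * x).
  { apply Rmult_le_reg_r with e0; auto. rewrite Rmult_assoc. lra. }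
  assert (Hy : 1 - a / 2 * h <= exp (- (a / 2 * h))) by (assert (H := exp_ineq1_le (- (a / 2 * h))); lra).
  assert (Hxy : x * exp (- (a / 2 * h)) = 1) by (unfold x; rewrite <- exp_plus, Rplus_opp_r; apply exp_0).
  assert (H3 : (S0 + K) * exp (- (a / 2 * h)) <= S1 + K).
  { apply Rmult_le_compat_r with (r := exp (- (a / 2 * h))) in H2; [| apply Rlt_le, exp_pos].
    rewrite Rmult_assoc, Hxy, Rmult_1_r in H2. auto. }
  assert (H4 : (S0 + K) * (1 - a / 2 * h) <= (S0 + K) * exp (- (a / 2 * h)))
    by (apply Rmult_le_compat_l; lra).
  assert (H5 : (S0 + K) * (1 - a / 2 * h) = S0 + K - (a / 2 * S0 + a / 2 * K) * h) by ring.
  rewrite HaK in H5. lra.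
Qed.

Lemma cpt_plus f g x : continuity_pt f x -> continuity_pt g x -> continuity_pt (fun s => f s + g s) x.
Proof. intros; apply (continuity_pt_plus f g x); auto. Qed.
Lemma cpt_mult f g x : continuity_pt f x -> continuity_pt g x -> continuity_pt (fun s => f s * g s) x.
Proof. intros; apply (continuity_pt_mult f g x); auto. Qed.

Lemma Etrue_cont X DA A DB B delta u du g mu t :
  Setting X DA A DB B delta u du g -> 0 < t -> continuity_pt (Etrue X B mu u du) t.
Proof.
  intros HS Ht. destruct HS as [HA [HB [Hsp [HDu [Hcu [HcBu [Hdu [Hcdu [Hcg Hweak]]]]]]]]].
  unfold Etrue. apply cpt_plus. apply cpt_plus.
  - apply Rcont_cpt, Rcont_ip; apply cont_pos_Cn; auto.
  - apply Rcont_cpt. apply (Rcont_ip X (fun s => B (u s)) (fun s => B (u s))); apply cont_pos_Cn; auto.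
  - apply cpt_mult. apply continuity_pt_const. intros x y; auto.
    apply Rcont_cpt, Rcont_ip; apply cont_pos_Cn; auto.
Qed.

Lemma phase X DA A DB B delta u du g mu a L T1 T2 :
  Setting X DA A DB B delta u du g -> 0 < delta -> 4 * delta <= a ->
  0 <= mu -> mu <= 4 * delta * (a - 4 * delta) -> 0 < T1 -> T1 <= T2 -> 0 <= L ->
  (forall t, T1 <= t <= T2 -> hnorm (g t) <= L * sqrt (Etrue X B mu u du t)) ->
  sqrt (Etrue X B mu u du T1) * exp ((a / 2 + L) * T1) <=
  sqrt (Etrue X B mu u du T2) * exp ((a / 2 + L) * T2).
Proof.
  intros HS Hd Ha Hmu Hmu2 HT1 H12 HL HgL.
  set (b := a / 2 + L). assert (Hb : 0 <= b) by (unfold b; lra).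
  apply (mono_sup (fun s => sqrt (Etrue X B mu u du s) * exp (b * s)) T1 T2 H12).
  - intros t Ht. apply cpt_mult.
    + apply (continuity_pt_comp (Etrue X B mu u du) sqrt t).
      apply (Etrue_cont X DA A DB B delta u du g); auto; lra.
      apply continuity_pt_sqrt. apply Etrue_ge0; auto.
    + apply derivable_continuous_pt. exists (b * exp (b * t)). apply dpl_expl.
  - intros t Ht eps He.
    assert (Ht0 : 0 < t) by lra.
    destruct (real_dini (fun s => sqrt (Etrue X B mu u du s)) b t Hb (sqrt_pos _)) with (eps := eps)
      as [h0 [Hh0 Hh1]]; auto.
    + intros e' He'.
      destruct (dini_lin X DA A DB B delta u du g mu a t HS Ht0 Hd Ha Hmu Hmu2 e' He') as [h0 [Hh0 Hh1]].
      exists h0; split; auto. intros h Hh. split. apply sqrt_pos.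
      specialize (Hh1 h Hh). assert (HG := HgL t (conj (proj1 Ht) (Rlt_le _ _ (proj2 Ht)))).
      assert ((a / 2 * sqrt (Etrue X B mu u du t) + hnorm (g t) + e') * h <=
              (b * sqrt (Etrue X B mu u du t) + e') * h); [|lra].
      apply Rmult_le_compat_r. lra. unfold b. lra.
    + exists h0; split; auto.
Qed.


Lemma exp_le' x y : x <= y -> exp x <= exp y.
Proof. intros [H|H]. apply Rlt_le, exp_increasing; auto. subst; lra. Qed.

Lemma rpow_le x M p : 0 <= x <= M -> 0 < M -> 0 < p -> rpow x (1 + p) <= Rpower M p * x.
Proof.
  intros Hx HM Hp. unfold rpow. destruct (Rle_dec x 0).
  - assert (x = 0) by lra. subst. rewrite Rmult_0_r. lra.
  - assert (Hx0 : 0 < x) by lra. rewrite Rpower_plus, Rpower_1 by auto.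
    rewrite (Rmult_comm (Rpower M p)). apply Rmult_le_compat_l. lra. apply Rle_Rpower_l; lra.
Qed.

Lemma hnorm_sq2 (X : RHilbert) (x : X) : hnorm x ^ 2 = hinner x x.
Proof. simpl. rewrite Rmult_1_r. apply nrm_sq. Qed.

Lemma dnorm_eq (X : RHilbert) (B : X -> X) x : dnorm B x = sqrt (hinner x x + hinner (B x) (B x)).
Proof. unfold dnorm. rewrite !hnorm_sq2. reflexivity. Qed.

Lemma nrm_le_dnorm (X : RHilbert) (B : X -> X) x : hnorm x <= dnorm B x /\ hnorm (B x) <= dnorm B x.
Proof.
  rewrite dnorm_eq. unfold hnorm. assert (H1 := hinner_pos X x). assert (H2 := hinner_pos X (B x)).
  split; apply sqrt_le_1_alt; lra.
Qed.

Lemma sqrt_mono_sq a b : 0 <= a -> a * a <= b -> a <= sqrt b.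
Proof. intros Ha H. rewrite <- (sqrt_square a) by auto. apply sqrt_le_1_alt; auto. Qed.

Lemma Etrue_bounds X B mu u du s : 0 < mu ->
  sqrt mu * hnorm (u s) <= sqrt (Etrue X B mu u du s) /\
  hnorm (B (u s)) <= sqrt (Etrue X B mu u du s) /\
  sqrt (Etrue X B mu u du s) <= sqrt (1 + mu) * (hnorm (du s) + dnorm B (u s)).
Proof.
  intros Hmu. unfold Etrue.
  assert (H1 := hinner_pos X (du s)). assert (H2 := hinner_pos X (B (u s))). assert (H3 := hinner_pos X (u s)).
  assert (Hm : 0 <= mu * hinner (u s) (u s)) by (apply Rmult_le_pos; lra).
  assert (Hsm : sqrt mu * sqrt mu = mu) by (apply sqrt_sqrt; lra).
  assert (Hn1 := nrm_ge0 X (u s)). assert (Hn2 := nrm_ge0 X (B (u s))). assert (Hn3 := nrm_ge0 X (du s)).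
  assert (Hs0 : 0 <= sqrt mu) by apply sqrt_pos.
  split; [|split].
  - apply sqrt_mono_sq. apply Rmult_le_pos; auto.
    replace (sqrt mu * hnorm (u s) * (sqrt mu * hnorm (u s))) with ((sqrt mu * sqrt mu) * (hnorm (u s) * hnorm (u s)))
      by ring. rewrite Hsm, nrm_sq. lra.
  - apply sqrt_mono_sq; auto. rewrite nrm_sq. lra.
  - assert (Hs1 : sqrt (1 + mu) * sqrt (1 + mu) = 1 + mu) by (apply sqrt_sqrt; lra).
    assert (Hs10 : 0 <= sqrt (1 + mu)) by apply sqrt_pos.
    assert (Hdd : 0 <= dnorm B (u s)) by apply sqrt_pos.
    rewrite <- (sqrt_square (sqrt (1 + mu) * (hnorm (du s) + dnorm B (u s)))) by (apply Rmult_le_pos; lra).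
    apply sqrt_le_1_alt.
    replace (sqrt (1 + mu) * (hnorm (du s) + dnorm B (u s)) * (sqrt (1 + mu) * (hnorm (du s) + dnorm B (u s))))
      with ((sqrt (1 + mu) * sqrt (1 + mu)) * ((hnorm (du s) + dnorm B (u s)) * (hnorm (du s) + dnorm B (u s)))) by ring.
    rewrite Hs1.
    assert (Hd : dnorm B (u s) * dnorm B (u s) = hinner (u s) (u s) + hinner (B (u s)) (B (u s))).
    { rewrite dnorm_eq. apply sqrt_sqrt. lra. }
    assert (Hd0 : 0 <= dnorm B (u s)) by apply sqrt_pos.
    rewrite <- (nrm_sq X (du s)) in *.
    assert (0 <= hnorm (du s) * dnorm B (u s)) by (apply Rmult_le_pos; auto).
    assert (hinner (u s) (u s) <= dnorm B (u s) * dnorm B (u s)) by lra.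
    assert (mu * hinner (u s) (u s) <= mu * (dnorm B (u s) * dnorm B (u s))) by (apply Rmult_le_compat_l; lra).
    assert (0 <= mu * (hnorm (du s) * hnorm (du s))) by (apply Rmult_le_pos; [lra| apply Rmult_le_pos; auto]).
    assert (0 <= mu * (hnorm (du s) * dnorm B (u s))) by (apply Rmult_le_pos; lra).
    nra.
Qed.

Lemma g_bound (X : RHilbert) B K0 p q mu (u du g : R -> X) s M :
  0 <= K0 -> 0 < p -> 0 < q -> 0 < mu -> 0 < M -> dnorm B (u s) <= M ->
  hnorm (g s) <= K0 * (rpow (hnorm (u s)) (1 + p) + rpow (hnorm (B (u s))) (1 + q)) ->
  hnorm (g s) <= K0 * (Rpower M p / sqrt mu + Rpower M q) * sqrt (Etrue X B mu u du s).
Proof.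
  intros HK Hp Hq Hmu HM Hd Hg.
  destruct (nrm_le_dnorm X B (u s)) as [N1 N2].
  destruct (Etrue_bounds X B mu u du s Hmu) as [E1 [E2 _]].
  assert (M1 : hnorm (u s) <= M) by lra. assert (M2 : hnorm (B (u s)) <= M) by lra.
  assert (R1 := rpow_le (hnorm (u s)) M p (conj (nrm_ge0 X _) M1) HM Hp).
  assert (R2 := rpow_le (hnorm (B (u s))) M q (conj (nrm_ge0 X _) M2) HM Hq).
  assert (Hsm : 0 < sqrt mu) by (apply sqrt_lt_R0; lra).
  assert (Pp : 0 < Rpower M p) by (unfold Rpower; apply exp_pos).
  assert (Pq : 0 < Rpower M q) by (unfold Rpower; apply exp_pos).
  eapply Rle_trans. apply Hg. rewrite Rmult_assoc. apply Rmult_le_compat_l; auto.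
  assert (hnorm (u s) <= sqrt (Etrue X B mu u du s) / sqrt mu).
  { apply Rmult_le_reg_l with (sqrt mu); auto. replace (sqrt mu * (sqrt (Etrue X B mu u du s) / sqrt mu))
      with (sqrt (Etrue X B mu u du s)) by (field; lra). lra. }
  assert (Rpower M p * hnorm (u s) <= Rpower M p * (sqrt (Etrue X B mu u du s) / sqrt mu))
    by (apply Rmult_le_compat_l; lra).
  assert (Rpower M q * hnorm (B (u s)) <= Rpower M q * sqrt (Etrue X B mu u du s))
    by (apply Rmult_le_compat_l; lra).
  replace ((Rpower M p / sqrt mu + Rpower M q) * sqrt (Etrue X B mu u du s)) with
    (Rpower M p * (sqrt (Etrue X B mu u du s) / sqrt mu) + Rpower M q * sqrt (Etrue X B mu u du s))
    by (field; lra).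
  lra.
Qed.


Lemma dnorm_cont (X : RHilbert) DA A DB B delta (u du g : R -> X) t :
  Setting X DA A DB B delta u du g -> 0 < t -> continuity_pt (fun s => dnorm B (u s)) t.
Proof.
  intros HS Ht. assert (HS' := HS). destruct HS' as [HA [HB [Hsp [HDu [Hcu [HcBu [Hdu [Hcdu [Hcg Hweak]]]]]]]]].
  assert (E : (fun s => dnorm B (u s)) = (fun s => sqrt (hinner (u s) (u s) + hinner (B (u s)) (B (u s))))).
  { apply functional_extensionality. intro s. apply dnorm_eq. }
  rewrite E.
  apply (continuity_pt_comp (fun s => hinner (u s) (u s) + hinner (B (u s)) (B (u s))) sqrt t).
  - apply cpt_plus.
    + apply Rcont_cpt, Rcont_ip; apply cont_pos_Cn; auto.
    + apply Rcont_cpt. apply (Rcont_ip X (fun s => B (u s)) (fun s => B (u s))); apply cont_pos_Cn; auto.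
  - apply continuity_pt_sqrt. assert (H1 := hinner_pos X (u t)). assert (H2 := hinner_pos X (B (u t))). lra.
Qed.

Lemma Etrue_zero (X : RHilbert) B mu (u du : R -> X) t : 0 < mu -> sqrt (Etrue X B mu u du t) <= 0 -> u t = hzero.
Proof.
  intros Hmu H. assert (HE := Etrue_ge0 X B mu u du t (Rlt_le _ _ Hmu)).
  assert (Hs := sqrt_pos (Etrue X B mu u du t)).
  assert (E0 : Etrue X B mu u du t = 0).
  { apply sqrt_eq_0; auto. lra. }
  unfold Etrue in E0. apply hinner_def.
  assert (H1 := hinner_pos X (du t)). assert (H2 := hinner_pos X (B (u t))). assert (H3 := hinner_pos X (u t)).
  assert (Hm0 : 0 <= mu * hinner (u t) (u t)) by (apply Rmult_le_pos; lra).
  assert (Hm1 : mu * hinner (u t) (u t) = 0) by lra.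
  apply Rmult_integral in Hm1. destruct Hm1; lra.
Qed.

Theorem mainTheorem5
  (X : RHilbert) (DA : X -> Prop) (A : X -> X) (DB : X -> Prop) (B : X -> X)
  (delta : R) (Hdelta : 0 < delta)
  (HA : nonneg_self_adjoint DA A)
  (HB : is_sqrt_op DA A DB B)
  (Hspec : discrete_point_spectrum DA A)
  (K0 p q : R) (HK0 : 0 <= K0) (Hp : 0 < p) (Hq : 0 < q)
  (u du : R -> X)
  (Hsol : global_solution DB B delta K0 p q u du)
  (Hlim : forall eps, 0 < eps -> exists T, forall t, T <= t -> dnorm B (u t) < eps)
  (gamma : R) (Hgamma : 2 * delta < gamma)
  (Hexp : forall eps, 0 < eps -> exists T, forall t, T <= t ->
            (hnorm (du t) + dnorm B (u t)) * exp (gamma * t) < eps) :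
  forall t, 0 <= t -> u t = @hzero X.
Proof.
  destruct Hsol as [HDu [Hcu [HcBu [Hdu [Hcdu [g [Hcg [Hweak Hgb]]]]]]]].
  assert (HS : Setting X DA A DB B delta u du g).
  { exact (conj HA (conj HB (conj Hspec (conj HDu (conj Hcu (conj HcBu (conj Hdu (conj Hcdu (conj Hcg Hweak))))))))). }
  set (kappa := gamma - 2 * delta). assert (Hk : 0 < kappa) by (unfold kappa; lra).
  set (a := 4 * delta + kappa). set (mu := 4 * delta * kappa).
  assert (Ha : 4 * delta <= a) by (unfold a; lra).
  assert (Hmu : 0 < mu) by (unfold mu; apply Rmult_lt_0_compat; lra).
  assert (Hmu2 : mu <= 4 * delta * (a - 4 * delta)) by (unfold mu, a; right; ring).
  assert (Hsm : 0 < sqrt mu) by (apply sqrt_lt_R0; auto).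
  set (eta := (kappa / 2) / (K0 * (/ sqrt mu + 1) + 1)).
  assert (Hden : 0 < K0 * (/ sqrt mu + 1) + 1).
  { assert (0 <= K0 * (/ sqrt mu + 1)) by (apply Rmult_le_pos; [lra| assert (0 < / sqrt mu) by (apply Rinv_0_lt_compat; lra); lra]). lra. }
  assert (Heta : 0 < eta) by (apply Rdiv_lt_0_compat; lra).
  set (N := Rmax 0 (Rmax (- ln eta / p) (- ln eta / q))).
  set (theta := exp (- N)). assert (Hth : 0 < theta) by apply exp_pos.
  assert (Rp : forall r, 0 < r -> - ln eta / r <= N -> Rpower theta r <= eta).
  { intros r Hr HN. unfold Rpower, theta. rewrite ln_exp. rewrite <- (exp_ln eta) by auto.
    apply exp_le'. apply Rmult_le_compat_l with (r := r) in HN; [|lra].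
    replace (r * (- ln eta / r)) with (- ln eta) in HN by (field; lra). lra. }
  assert (Rpp : Rpower theta p <= eta).
  { apply Rp; auto. eapply Rle_trans; [|apply Rmax_r]. apply Rmax_l. }
  assert (Rpq : Rpower theta q <= eta).
  { apply Rp; auto. eapply Rle_trans; [|apply Rmax_r]. apply Rmax_r. }
  set (L1 := K0 * (Rpower theta p / sqrt mu + Rpower theta q)).
  assert (HL1 : 0 <= L1).
  { unfold L1. apply Rmult_le_pos; auto.
    assert (0 < Rpower theta p) by (unfold Rpower; apply exp_pos).
    assert (0 < Rpower theta q) by (unfold Rpower; apply exp_pos).
    assert (0 < Rpower theta p / sqrt mu) by (apply Rdiv_lt_0_compat; lra). lra. }
  assert (HL1b : L1 <= kappa / 2).
  { unfold L1. apply Rle_trans with (K0 * (eta / sqrt mu + eta)).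
    apply Rmult_le_compat_l; auto. apply Rplus_le_compat; auto.
    unfold Rdiv. apply Rmult_le_compat_r. apply Rlt_le, Rinv_0_lt_compat; lra. auto.
    assert (Ee : eta * (K0 * (/ sqrt mu + 1) + 1) = kappa / 2) by (unfold eta, Rdiv; rewrite Rmult_assoc, Rinv_l by lra; ring).
    assert (0 <= eta) by lra.
    replace (K0 * (eta / sqrt mu + eta)) with (eta * (K0 * (/ sqrt mu + 1))) by (field; lra). nra. }
  destruct (Hlim theta Hth) as [T HT].
  set (T0 := Rmax T 1). assert (HT0 : 1 <= T0) by apply Rmax_r.
  assert (P1 : forall T1, T0 <= T1 -> sqrt (Etrue X B mu u du T1) <= 0).
  { intros T1 HT1.
    set (b := a / 2 + L1). assert (Hbg : b <= gamma) by (unfold b, a, kappa in *; lra).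
    assert (Hb0 : 0 <= b) by (unfold b, a; lra).
    assert (Hmain : sqrt (Etrue X B mu u du T1) * exp (b * T1) <= 0).
    { apply le_of_forall_eps. intros z Hz.
      assert (Hs1 : 0 < sqrt (1 + mu)) by (apply sqrt_lt_R0; lra).
      destruct (Hexp (z / sqrt (1 + mu))) as [T' HT']. apply Rdiv_lt_0_compat; lra.
      set (T2 := Rmax T1 T'). assert (H12 : T1 <= T2) by apply Rmax_l.
      assert (HPh := phase X DA A DB B delta u du g mu a L1 T1 T2 HS Hdelta Ha (Rlt_le _ _ Hmu) Hmu2
         ltac:(lra) H12 HL1).
      fold b in HPh. eapply Rle_trans. apply HPh.
      + intros s Hs. apply (g_bound X B K0 p q mu u du g s theta); auto.
        apply Rlt_le, HT. apply Rle_trans with T0; [apply Rmax_l| lra].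
        apply Hgb. lra.
      + destruct (Etrue_bounds X B mu u du T2 Hmu) as [_ [_ E3]].
        specialize (HT' T2 (Rmax_r _ _)).
        assert (Hex : exp (b * T2) <= exp (gamma * T2)) by (apply exp_le'; apply Rmult_le_compat_r; lra).
        assert (Hnn : 0 <= hnorm (du T2) + dnorm B (u T2)).
        { assert (0 <= hnorm (du T2)) by apply nrm_ge0. assert (0 <= dnorm B (u T2)) by apply sqrt_pos. lra. }
        assert (Hsp : 0 <= sqrt (Etrue X B mu u du T2)) by apply sqrt_pos.
        assert (K1 : sqrt (Etrue X B mu u du T2) * exp (b * T2) <=
                     sqrt (1 + mu) * (hnorm (du T2) + dnorm B (u T2)) * exp (gamma * T2)).
        { apply Rmult_le_compat; auto. apply Rlt_le, exp_pos. }
        assert (K2 : (hnorm (du T2) + dnorm B (u T2)) * exp (gamma * T2) * sqrt (1 + mu) <= z).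
        { apply Rmult_lt_compat_r with (r := sqrt (1 + mu)) in HT'; auto.
          replace (z / sqrt (1 + mu) * sqrt (1 + mu)) with z in HT' by (field; lra). lra. }
        lra. }
    assert (0 < exp (b * T1)) by apply exp_pos.
    assert (0 <= sqrt (Etrue X B mu u du T1)) by apply sqrt_pos. nra. }
  intros t Ht.
  assert (Ppos : forall t0, 0 < t0 -> u t0 = hzero).
  { intros t0 Ht0. destruct (Rle_or_lt T0 t0) as [Hle|Hlt]. apply (Etrue_zero X B mu u du t0 Hmu); apply P1; auto.
    destruct (continuity_ab_maj (fun s => dnorm B (u s)) t0 T0) as [Mx [HMx1 HMx2]]. lra.
    { intros c Hc. apply (dnorm_cont X DA A DB B delta u du g); auto; lra. }
    set (M := dnorm B (u Mx) + 1).
    assert (HM : 0 < M). { unfold M. assert (0 <= dnorm B (u Mx)) by apply sqrt_pos. lra. }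
    set (L2 := K0 * (Rpower M p / sqrt mu + Rpower M q)).
    assert (HL2 : 0 <= L2).
    { unfold L2. apply Rmult_le_pos; auto.
      assert (0 < Rpower M p) by (unfold Rpower; apply exp_pos).
      assert (0 < Rpower M q) by (unfold Rpower; apply exp_pos).
      assert (0 < Rpower M p / sqrt mu) by (apply Rdiv_lt_0_compat; lra). lra. }
    apply (Etrue_zero X B mu u du t0 Hmu).
    assert (HPh := phase X DA A DB B delta u du g mu a L2 t0 T0 HS Hdelta Ha (Rlt_le _ _ Hmu) Hmu2
         Ht0 (Rlt_le _ _ Hlt) HL2).
    assert (HPh' : sqrt (Etrue X B mu u du t0) * exp ((a / 2 + L2) * t0) <=
                  sqrt (Etrue X B mu u du T0) * exp ((a / 2 + L2) * T0)).
    { apply HPh. intros s Hs. apply (g_bound X B K0 p q mu u du g s M); auto.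
      assert (dnorm B (u s) <= dnorm B (u Mx)) by (apply HMx1; lra). unfold M; lra.
      apply Hgb. lra. }
    assert (Z0 := P1 T0 (Rle_refl _)).
    assert (Z1 : 0 <= sqrt (Etrue X B mu u du T0)) by apply sqrt_pos.
    assert (Z2 : sqrt (Etrue X B mu u du T0) = 0) by lra. rewrite Z2, Rmult_0_l in HPh'.
    assert (0 < exp ((a / 2 + L2) * t0)) by apply exp_pos.
    assert (0 <= sqrt (Etrue X B mu u du t0)) by apply sqrt_pos. nra. }
  destruct (Req_dec t 0) as [Et|Et]; [|apply Ppos; lra].
  subst t. apply nrm_zero_iff. apply Rle_antisym; [|apply nrm_ge0].
  apply le_of_forall_eps. intros z Hz.
  destruct (Hcu 0 (Rle_refl _) z Hz) as [d [Hd Hd1]].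
  assert (Hq0 := Hd1 (d / 2) ltac:(lra) ltac:(rewrite Rminus_0_r, Rabs_right; lra)).
  rewrite (Ppos (d / 2) ltac:(lra)) in Hq0.
  assert (En : hnorm (hsub hzero (u 0)) = hnorm (u 0)).
  { unfold hnorm. f_equal. ipE. ring. }
  rewrite En in Hq0. lra.
Qed.
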